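(* Assume (A2), (A3) and that $V$ is irreducible. Let $n_0\in\mathcal N$ satisfy $\rho(B^{(n_0)})=\max_{n\in\mathcal N}\rho(B^{(n)})$. Then $$\psi(\rho(B^{(n_0)}))=\sup_{w\in\Pi_K^+}\inf_{p\in\mathcal P_+}G(w,p)=\inf_{p\in\mathcal P_+}\sup_{w\in\Pi_K^+}G(w,p).$$ Moreover, $(w^*,p^* )\in\Pi_K^+\times\mathcal P_+$ is a saddle point of $G$ if and only if $p^*=\bar p$ and $w^*\in\mathcal W$, where $\mathcal W=\{\sum_{n\in\mathcal N_0(\bar p)}c_nw^{(n)}: c_n\ge0,\ \sum_{n\in\mathcal N_0(\bar p)}c_n=1\}$ and, for each $n$, $w^{(n)}=y^{(n)}\circ x^{(n)}\in\Pi_K^+$ with $x^{(n)},y^{(n)}$ positive vectors satisfying $B^{(n)}x^{(n)}=\rho(B^{(n)})x^{(n)}$, $(B^{(n)})^Ty^{(n)}=\rho(B^{(n)})y^{(n)}$, $(y^{(n)})^Tx^{(n)}=1$.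
   Context: Network model: $K\ge 2$ links, $\mathcal K=\{1,\dots,K\}$. Power constraint set $\mathcal P=\{p\in\mathbb R_+^K: Cp\le\hat p\}$, where $C\in\{0,1\}^{N\times K}$ has at least one entry equal to $1$ in each column and $\hat p=(P_1,\dots,P_N)\in\mathbb R_{++}^N$; $\mathcal P_+=\mathcal P\cap\mathbb R_{++}^K$; $\mathcal N=\{1,\dots,N\}$; $c_n$ is the $n$-th row of $C$ as a column vector and $g_n(p)=c_n^Tp/P_n$. Gain matrix $V\in\mathbb R_+^{K\times K}$ with zero diagonal, noise vector $z\in\mathbb R_{++}^K$, $\mathrm{SIR}_k(p)=p_k/((Vp)_k+z_k)$. SIR targets $\gamma_k>0$, $\Gamma=\mathrm{diag}(\gamma_1,\dots,\gamma_K)$. $B^{(n)}=\Gamma V+\frac1{P_n}\Gamma z c_n^T$. $\mathcal N_0(p)=\{n\in\mathcal N: g_n(p)=\max_{m\in\mathcal N}g_m(p)=1\}$. $\bar p$ denotes the unique maximizer of $p\mapsto\min_k\mathrm{SIR}_k(p)/\gamma_k$ over $\mathcal P$. Assumption (A2): $\phi:\mathbb R_{++}\to\mathbb R$ is continuously differentiable and strictly increasing; $\mathcal Q=\phi(\mathbb R_{++})$. Assumption (A3): $\phi^{-1}:\mathcal Q\to\mathbb R_{++}$ is log-convex. $\psi(x)=-\phi(1/x)$ for $x>0$. $\Pi_K=\{x\in\mathbb R_+^K:\|x\|_1=1\}$, $\Pi_K^+=\Pi_K\cap\mathbb R_{++}^K$. $G:\Pi_K^+\times\mathcal P_+\to\mathbb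 R$, $G(w,p)=\sum_{k\in\mathcal K}w_k\psi(\gamma_k/\mathrm{SIR}_k(p))$. $\circ$ denotes the entrywise product; $\rho(\cdot)$ the spectral radius. *)

(* Defs.v *)
From Stdlib Require Import Reals Lra.
Open Scope R_scope.

(* Vectors in R^K are functions nat -> R (only indices < K matter);
   matrices are functions nat -> nat -> R. *)

Fixpoint rsum (n : nat) (f : nat -> R) : R :=
  match n with
  | O => 0
  | S m => rsum m f + f m
  end.

(* rmin n f = min_{k<n} f k  (n >= 1; value 0 for n = 0, never used) *)
Fixpoint rmin (n : nat) (f : nat -> R) : R :=
  match n with
  | O => 0
  | S O => f O
  | S m => Rmin (rmin m f) (f m)
  end.

Definition mxv (K : nat) (A : nat -> nat -> R) (x : nat -> R) : nat -> R :=
  fun i => rsum K (fun j => A i j * x j).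

Definition trmx (A : nat -> nat -> R) : nat -> nat -> R := fun i j => A j i.

(* complex eigenvalue (a + i b) of a real K x K matrix A, with eigenvector u + i v *)
Definition is_eigenvalue (K : nat) (A : nat -> nat -> R) (a b : R) : Prop :=
  exists u v : nat -> R,
    (exists k, (k < K)%nat /\ (u k <> 0 \/ v k <> 0)) /\
    (forall i, (i < K)%nat -> mxv K A u i = a * u i - b * v i) /\
    (forall i, (i < K)%nat -> mxv K A v i = b * u i + a * v i).

Definition is_spectral_radius (K : nat) (A : nat -> nat -> R) (r : R) : Prop :=
  (exists a b, is_eigenvalue K A a b /\ sqrt (a * a + b * b) = r) /\
  (forall a b, is_eigenvalue K A a b -> sqrt (a * a + b * b) <= r).

(* irreducibility: there is no nonempty proper subset S of {0..K-1} with
   A i j = 0 for all i not in S, j in S (i.e. A is not permutation-similar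
   to a block upper triangular matrix). *)
Definition irreducible (K : nat) (A : nat -> nat -> R) : Prop :=
  forall S : nat -> Prop,
    (exists j, (j < K)%nat /\ S j) ->
    (exists i, (i < K)%nat /\ ~ S i) ->
    exists i j, (i < K)%nat /\ (j < K)%nat /\ ~ S i /\ S j /\ A i j <> 0.

Definition SIR (K : nat) (V : nat -> nat -> R) (z : nat -> R) (p : nat -> R) (k : nat) : R :=
  p k / (mxv K V p k + z k).

Definition inP (K N : nat) (C : nat -> nat -> R) (Ph : nat -> R) (p : nat -> R) : Prop :=
  (forall k, (k < K)%nat -> 0 <= p k) /\
  (forall n, (n < N)%nat -> rsum K (fun j => C n j * p j) <= Ph n).

Definition inPplus (K N : nat) (C : nat -> nat -> R) (Ph : nat -> R) (p : nat -> R) : Prop :=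
  inP K N C Ph p /\ (forall k, (k < K)%nat -> 0 < p k).

Definition gfun (K : nat) (C : nat -> nat -> R) (Ph : nat -> R) (n : nat) (p : nat -> R) : R :=
  rsum K (fun j => C n j * p j) / Ph n.

Definition inN0 (K N : nat) (C : nat -> nat -> R) (Ph : nat -> R) (p : nat -> R) (n : nat) : Prop :=
  (n < N)%nat /\ gfun K C Ph n p = 1 /\
  (forall m, (m < N)%nat -> gfun K C Ph m p <= 1).

Definition Bmat (V : nat -> nat -> R) (z gam : nat -> R) (C : nat -> nat -> R) (Ph : nat -> R)
  (n : nat) : nat -> nat -> R :=
  fun k j => gam k * V k j + / Ph n * (gam k * z k * C n j).

Definition psi (phi : R -> R) (x : R) : R := - phi (/ x).

Definition Gfun (K : nat) (phi : R -> R) (V : nat -> nat -> R) (z gam : nat -> R)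
  (w p : nat -> R) : R :=
  rsum K (fun k => w k * psi phi (gam k / SIR K V z p k)).

Definition inPiplus (K : nat) (w : nat -> R) : Prop :=
  (forall k, (k < K)%nat -> 0 < w k) /\ rsum K w = 1.

Definition A2 (phi : R -> R) : Prop :=
  (exists dphi : R -> R,
      (forall x, 0 < x -> derivable_pt_lim phi x (dphi x)) /\
      (forall x, 0 < x -> continuity_pt dphi x)) /\
  (forall x y, 0 < x -> x < y -> phi x < phi y).

(* (A3): phi^{-1} : Q -> R_{++} is log-convex, i.e. q |-> ln(phi^{-1}(q)) is convex on
   Q = phi(R_{++}). For q1 = phi x, q2 = phi y and phi u = t q1 + (1-t) q2,
   ln u <= t ln x + (1-t) ln y. *)
Definition A3 (phi : R -> R) : Prop :=
  forall x y u t, 0 < x -> 0 < y -> 0 < u -> 0 <= t <= 1 ->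
    phi u = t * phi x + (1 - t) * phi y ->
    ln u <= t * ln x + (1 - t) * ln y.

(* sup_{a ∈ SA} inf_{b ∈ SB} F a b = v  (sup / inf in the extended reals) *)
Definition sup_inf_eq {A B : Type} (SA : A -> Prop) (SB : B -> Prop) (F : A -> B -> R) (v : R)
  : Prop :=
  (* for every a, inf_b F a b <= v *)
  (forall a, SA a -> forall eps, 0 < eps -> exists b, SB b /\ F a b < v + eps) /\
  (* for every eps, some a has inf_b F a b >= v - eps *)
  (forall eps, 0 < eps -> exists a, SA a /\ forall b, SB b -> v - eps <= F a b).

(* inf_{b ∈ SB} sup_{a ∈ SA} F a b = v  (sup / inf in the extended reals) *)
Definition inf_sup_eq {A B : Type} (SA : A -> Prop) (SB : B -> Prop) (F : A -> B -> R) (v : R)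
  : Prop :=
  (forall b, SB b -> forall eps, 0 < eps -> exists a, SA a /\ v - eps < F a b) /\
  (forall eps, 0 < eps -> exists b, SB b /\ forall a, SA a -> F a b <= v + eps).

Definition saddle_point (K N : nat) (C : nat -> nat -> R) (Ph : nat -> R)
  (G : (nat -> R) -> (nat -> R) -> R) (ws ps : nat -> R) : Prop :=
  inPiplus K ws /\ inPplus K N C Ph ps /\
  (forall w, inPiplus K w -> G w ps <= G ws ps) /\
  (forall p, inPplus K N C Ph p -> G ws ps <= G ws p).

(* Main.v *)
Require Import Defs.
From Stdlib Require Import Reals Lra Lia Psatz Ranalysis5 Classical ClassicalEpsilon FunctionalExtensionality.
Open Scope R_scope.

Ltac nz := let H := fresh in intro H; lra.


Lemma rsum_ext n f g : (forall i, (i < n)%nat -> f i = g i) -> rsum n f = rsum n g.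
Proof. induction n; simpl; intros H; auto. rewrite IHn by (intros; apply H; lia). rewrite H by lia. auto. Qed.

Lemma rsum_S n f : rsum (S n) f = rsum n f + f n.
Proof. reflexivity. Qed.

Lemma rsum_plus n f g : rsum n (fun i => f i + g i) = rsum n f + rsum n g.
Proof. induction n; simpl; [lra|]. rewrite IHn. lra. Qed.

Lemma rsum_minus n f g : rsum n (fun i => f i - g i) = rsum n f - rsum n g.
Proof. induction n; simpl; [lra|]. rewrite IHn. lra. Qed.

Lemma rsum_scal n c f : rsum n (fun i => c * f i) = c * rsum n f.
Proof. induction n; simpl; [lra|]. rewrite IHn. lra. Qed.

Lemma rsum_scal_r n c f : rsum n (fun i => f i * c) = rsum n f * c.
Proof. induction n; simpl; [lra|]. rewrite IHn. lra. Qed.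

Lemma rsum_zero n f : (forall i, (i < n)%nat -> f i = 0) -> rsum n f = 0.
Proof. intros H. rewrite (rsum_ext n f (fun _ => 0)) by auto. induction n; simpl; auto.
 rewrite IHn; [lra|]. intros; apply H; lia. Qed.

Lemma rsum_le n f g : (forall i, (i < n)%nat -> f i <= g i) -> rsum n f <= rsum n g.
Proof. induction n; simpl; intros H; [lra|]. assert (H1:=H n ltac:(lia)).
 assert (rsum n f <= rsum n g) by (apply IHn; intros; apply H; lia). lra. Qed.

Lemma rsum_nonneg n f : (forall i, (i < n)%nat -> 0 <= f i) -> 0 <= rsum n f.
Proof. intros H. replace 0 with (rsum n (fun _ => 0)) by (apply rsum_zero; auto).
 apply rsum_le; auto. Qed.

Lemma rsum_lt n f g : (forall i, (i < n)%nat -> f i <= g i) ->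
  (exists i, (i < n)%nat /\ f i < g i) -> rsum n f < rsum n g.
Proof. induction n; simpl; intros H [i [Hi Hlt]]; [lia|].
 destruct (Nat.eq_dec i n) as [->|Hne].
 - assert (rsum n f <= rsum n g) by (apply rsum_le; intros; apply H; lia). lra.
 - assert (rsum n f < rsum n g) by (apply IHn; [intros; apply H; lia| exists i; split; [lia|auto]]).
   assert (H1:=H n ltac:(lia)). lra. Qed.

Lemma rsum_pos n f : (forall i, (i < n)%nat -> 0 <= f i) ->
  (exists i, (i < n)%nat /\ 0 < f i) -> 0 < rsum n f.
Proof. intros H H'. replace 0 with (rsum n (fun _ => 0)) by (apply rsum_zero; auto).
 apply rsum_lt; auto. Qed.

Lemma rsum_swap n m (f : nat -> nat -> R) :
  rsum n (fun i => rsum m (fun j => f i j)) = rsum m (fun j => rsum n (fun i => f i j)).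
Proof. induction n; simpl.
 - symmetry; apply rsum_zero; auto.
 - rewrite IHn. rewrite <- rsum_plus. auto. Qed.

Lemma rsum_single n j a : (j < n)%nat ->
  rsum n (fun i => if Nat.eq_dec i j then a else 0) = a.
Proof. induction n; simpl; intros Hj; [lia|].
 destruct (Nat.eq_dec n j).
 - subst. rewrite rsum_zero. lra. intros i Hi. destruct (Nat.eq_dec i j); [lia|auto].
 - rewrite IHn by lia. lra. Qed.

Lemma rsum_single_f n j (f : nat -> R) : (j < n)%nat ->
  rsum n (fun i => if Nat.eq_dec i j then f i else 0) = f j.
Proof. intros Hj. rewrite <- (rsum_single n j (f j) Hj). apply rsum_ext.
 intros i _. destruct (Nat.eq_dec i j); subst; auto. Qed.

Definition skip (i j : nat) : nat := if Nat.ltb j i then j else S j.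

Lemma rsum_skip n i g : (i <= n)%nat ->
  rsum (S n) g = rsum n (fun j => g (skip i j)) + g i.
Proof. induction n; intros Hi.
 - simpl. assert (i = 0)%nat by lia. subst. lra.
 - destruct (Nat.eq_dec i (S n)) as [->|Hne].
   + change (rsum (S (S n)) g) with (rsum (S n) g + g (S n)).
     f_equal. apply rsum_ext. intros j Hj. unfold skip.
     destruct (Nat.ltb_spec j (S n)); [auto|lia].
   + change (rsum (S (S n)) g) with (rsum (S n) g + g (S n)).
     rewrite IHn by lia. simpl.
     replace (skip i n) with (S n) by (unfold skip; destruct (Nat.ltb_spec n i); lia). lra. Qed.

Lemma mxv_plus K A x y i : mxv K A (fun j => x j + y j) i = mxv K A x i + mxv K A y i.
Proof. unfold mxv. rewrite <- rsum_plus. apply rsum_ext; intros; ring. Qed.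

Lemma mxv_scal K A c x i : mxv K A (fun j => c * x j) i = c * mxv K A x i.
Proof. unfold mxv. rewrite <- rsum_scal. apply rsum_ext; intros; ring. Qed.

Lemma mxv_ext K A x y i : (forall j, (j < K)%nat -> x j = y j) -> mxv K A x i = mxv K A y i.
Proof. intros H; unfold mxv; apply rsum_ext; intros; rewrite H; auto. Qed.

Lemma dependent n : forall v : nat -> nat -> R,
  exists lam : nat -> R, (exists j, (j <= n)%nat /\ lam j <> 0) /\
    forall k, (k < n)%nat -> rsum (S n) (fun j => lam j * v j k) = 0.
Proof.
 induction n; intros v.
 - exists (fun _ => 1). split; [exists 0%nat; split; [lia|lra]|]. intros; lia.
 - destruct (classic (exists i, (i <= S n)%nat /\ v i n <> 0)) as [[i [Hi Hv]]|Hno].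
   + set (w := fun j k => v (skip i j) k - (v (skip i j) n / v i n) * v i k).
     destruct (IHn w) as [lam [[j0 [Hj0 Hl0]] Hs]].
     set (mu := fun j => if Nat.eq_dec j i then - rsum (S n) (fun l => lam l * (v (skip i l) n / v i n))
                        else lam (if Nat.ltb j i then j else pred j)).
     exists mu. split.
     * exists (skip i j0). split. unfold skip; destruct (Nat.ltb_spec j0 i); lia.
       unfold mu. unfold skip. destruct (Nat.ltb_spec j0 i).
       -- destruct (Nat.eq_dec j0 i); [lia|]. destruct (Nat.ltb_spec j0 i); [auto|lia].
       -- destruct (Nat.eq_dec (S j0) i); [lia|]. destruct (Nat.ltb_spec (S j0) i); [lia|]. simpl; auto.
     * intros k Hk. rewrite (rsum_skip (S n) i) by lia.
       assert (Hm : forall j, (j < S n)%nat -> mu (skip i j) = lam j).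
       { intros j Hj. unfold mu, skip. destruct (Nat.ltb_spec j i).
         - destruct (Nat.eq_dec j i); [lia|]. destruct (Nat.ltb_spec j i); [auto|lia].
         - destruct (Nat.eq_dec (S j) i); [lia|]. destruct (Nat.ltb_spec (S j) i); [lia|]. simpl; auto. }
       rewrite (rsum_ext _ _ (fun j => lam j * v (skip i j) k)) by (intros; rewrite Hm; auto).
       assert (Hmi : mu i = - rsum (S n) (fun l => lam l * (v (skip i l) n / v i n))).
       { unfold mu. destruct (Nat.eq_dec i i); [auto|lia]. }
       rewrite Hmi.
       match goal with |- rsum ?m ?f + - rsum ?m ?g * ?c = 0 =>
         replace (rsum m f + - rsum m g * c) with (rsum m (fun j => f j - g j * c))
           by (rewrite rsum_minus, rsum_scal_r; ring) end.
       destruct (Nat.eq_dec k n) as [->|Hkn].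
       -- apply rsum_zero. intros. field. auto.
       -- rewrite <- (Hs k ltac:(lia)). apply rsum_ext. intros. unfold w. ring.
   + destruct (IHn v) as [lam [[j0 [Hj0 Hl0]] Hs]].
     exists (fun j => if Nat.eq_dec j (S n) then 0 else lam j). split.
     * exists j0. split; [lia|]. destruct (Nat.eq_dec j0 (S n)); [lia|auto].
     * intros k Hk. rewrite rsum_S; cbv beta.
       replace (if Nat.eq_dec (S n) (S n) then 0 else lam (S n)) with 0 by (destruct (Nat.eq_dec (S n) (S n)); [auto|lia]).
       destruct (Nat.eq_dec k n) as [->|Hkn].
       -- rewrite rsum_zero. lra. intros j Hj. assert (v j n = 0).
          { apply NNPP; intro; apply Hno; exists j; split; [lia|auto]. } rewrite H. ring.
       -- rewrite Rmult_0_l, Rplus_0_r. rewrite <- (Hs k ltac:(lia)). apply rsum_ext.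
          intros j Hj. destruct (Nat.eq_dec j (S n)); [lia|auto].
Qed.

Lemma solve K (A : nat -> nat -> R) :
  (forall x, (forall i, (i < K)%nat -> mxv K A x i = 0) -> forall i, (i < K)%nat -> x i = 0) ->
  forall b, exists x, forall i, (i < K)%nat -> mxv K A x i = b i.
Proof.
 intros Hinj b.
 destruct (dependent K (fun j k => if Nat.ltb j K then A k j else b k)) as [lam [[j0 [Hj0 Hl0]] Hs]].
 assert (Hs' : forall k, (k < K)%nat -> mxv K A lam k + lam K * b k = 0).
 { intros k Hk. rewrite <- (Hs k Hk). simpl. unfold mxv. f_equal.
   apply rsum_ext. intros j Hj. destruct (Nat.ltb_spec j K); [ring|lia].
   destruct (Nat.ltb_spec K K); [lia|auto]. }
 destruct (Req_dec (lam K) 0) as [HK|HK].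
 - exfalso. assert (forall i, (i < K)%nat -> lam i = 0).
   { apply Hinj. intros i Hi. rewrite <- (Hs' i Hi), HK. ring. }
   destruct (Nat.eq_dec j0 K). subst; auto. apply Hl0, H. lia.
 - exists (fun j => - lam j / lam K). intros i Hi.
   replace (fun j => - lam j / lam K) with (fun j => (- / lam K) * lam j)
     by (apply functional_extensionality; intros; field; auto).
   rewrite mxv_scal. specialize (Hs' i Hi). field_simplify; auto.
   replace (mxv K A lam i) with (- (lam K * b i)) by lra. field. auto.
Qed.



Lemma rmin_attained n f : (1 <= n)%nat -> exists k, (k < n)%nat /\ rmin n f = f k.
Proof. induction n; intros Hn; [lia|]. destruct n.
 - exists 0%nat. split; [lia|reflexivity].
 - destruct (IHn ltac:(lia)) as [k [Hk Hr]].
   change (rmin (S (S n)) f) with (Rmin (rmin (S n) f) (f (S n))).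
   unfold Rmin. destruct (Rle_dec (rmin (S n) f) (f (S n))).
   + exists k; split; [lia|auto].
   + exists (S n); split; [lia|auto]. Qed.

Lemma rmin_le n f k : (k < n)%nat -> rmin n f <= f k.
Proof. induction n; intros Hk; [lia|]. destruct n.
 - assert (k = 0)%nat by lia. subst. simpl. lra.
 - change (rmin (S (S n)) f) with (Rmin (rmin (S n) f) (f (S n))).
   destruct (Nat.eq_dec k (S n)). subst. apply Rmin_r.
   eapply Rle_trans. apply Rmin_l. apply IHn. lia. Qed.

Lemma rmin_ge n f m : (1 <= n)%nat -> (forall k, (k < n)%nat -> m <= f k) -> m <= rmin n f.
Proof. intros Hn H. destruct (rmin_attained n f Hn) as [k [Hk ->]]. auto. Qed.

Lemma rmin_lt n f g : (1 <= n)%nat -> (forall k, (k < n)%nat -> f k < g k) -> rmin n f < rmin n g.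
Proof. intros Hn H. destruct (rmin_attained n g Hn) as [k [Hk ->]].
 eapply Rle_lt_trans. apply (rmin_le n f k Hk). auto. Qed.

Lemma rmin_ext n f g : (forall k, (k < n)%nat -> f k = g k) -> rmin n f = rmin n g.
Proof. induction n; intros H; auto. destruct n. simpl. apply H; lia.
 change (rmin (S (S n)) f) with (Rmin (rmin (S n) f) (f (S n))).
 change (rmin (S (S n)) g) with (Rmin (rmin (S n) g) (g (S n))).
 rewrite IHn by (intros; apply H; lia). rewrite H by lia. auto. Qed.

Lemma argmax n f : (1 <= n)%nat -> exists k, (k < n)%nat /\ forall j, (j < n)%nat -> f j <= f k.
Proof. intros Hn. destruct (rmin_attained n (fun j => - f j) Hn) as [k [Hk Hr]].
 exists k. split; auto. intros j Hj. assert (H:=rmin_le n (fun j => - f j) j Hj). simpl in *. lra. Qed.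

Lemma fin_small N (P : nat -> R -> Prop) :
  (forall n, (n < N)%nat -> exists e, 0 < e /\ forall s, 0 < s <= e -> P n s) ->
  exists e, 0 < e /\ forall n, (n < N)%nat -> forall s, 0 < s <= e -> P n s.
Proof. induction N; intros H.
 - exists 1. split; [lra|]. intros; lia.
 - destruct IHN as [e1 [He1 H1]]. intros; apply H; lia.
   destruct (H N ltac:(lia)) as [e2 [He2 H2]].
   exists (Rmin e1 e2). split. apply Rmin_glb_lt; auto.
   intros n Hn s Hs. assert (Rmin e1 e2 <= e1) by apply Rmin_l. assert (Rmin e1 e2 <= e2) by apply Rmin_r.
   destruct (Nat.eq_dec n N). subst. apply H2; lra. apply H1; [lia|lra]. Qed.

Lemma mink a b c d : sqrt ((a + c) * (a + c) + (b + d) * (b + d)) <= sqrt (a * a + b * b) + sqrt (c * c + d * d).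
Proof.
 set (S1 := sqrt (a * a + b * b)). set (S2 := sqrt (c * c + d * d)).
 assert (H1 : S1 * S1 = a * a + b * b) by (apply sqrt_sqrt; nra).
 assert (H2 : S2 * S2 = c * c + d * d) by (apply sqrt_sqrt; nra).
 assert (P1 : 0 <= S1) by apply sqrt_pos. assert (P2 : 0 <= S2) by apply sqrt_pos.
 clearbody S1 S2.
 rewrite <- (sqrt_square (S1 + S2)) by lra. apply sqrt_le_1_alt.
 assert (a * c + b * d <= S1 * S2).
 { destruct (Rle_or_lt (a * c + b * d) 0). nra.
   assert ((a * c + b * d) * (a * c + b * d) <= (S1 * S2) * (S1 * S2)).
   { replace ((S1 * S2) * (S1 * S2)) with ((S1 * S1) * (S2 * S2)) by ring. rewrite H1, H2.
     pose proof (Rle_0_sqr (a*d - b*c)) as Hs. unfold Rsqr in Hs.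
     replace ((a * a + b * b) * (c * c + d * d)) with ((a * c + b * d) * (a * c + b * d) + (a*d - b*c)*(a*d-b*c)) by ring. lra. }
   destruct (Rle_or_lt (a*c+b*d) (S1*S2)) as [Hl|Hl]; auto. exfalso.
   assert (0 <= S1*S2) by (apply Rmult_le_pos; auto).
   assert ((S1*S2)*(S1*S2) < (a*c+b*d)*(a*c+b*d)) by (apply Rmult_le_0_lt_compat; lra). lra. }
 replace ((S1+S2)*(S1+S2)) with (S1*S1 + S2*S2 + 2*(S1*S2)) by ring. rewrite H1,H2. lra. Qed.

Lemma norm_sum n (p q : nat -> R) :
  sqrt (rsum n p * rsum n p + rsum n q * rsum n q) <= rsum n (fun j => sqrt (p j * p j + q j * q j)).
Proof. induction n; simpl.
 - replace (0 * 0 + 0 * 0) with 0 by ring. rewrite sqrt_0. lra.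
 - eapply Rle_trans. apply mink. lra. Qed.

Lemma mod_mult a b u v : sqrt ((a * u - b * v) * (a * u - b * v) + (b * u + a * v) * (b * u + a * v))
  = sqrt (a * a + b * b) * sqrt (u * u + v * v).
Proof. rewrite <- sqrt_mult by nra. f_equal. ring. Qed.

Lemma spec_bound K (B : nat -> nat -> R) (x : nat -> R) r a b :
  (forall i j, (i < K)%nat -> (j < K)%nat -> 0 <= B i j) ->
  (forall k, (k < K)%nat -> 0 < x k) ->
  (forall k, (k < K)%nat -> mxv K B x k <= r * x k) ->
  is_eigenvalue K B a b -> sqrt (a * a + b * b) <= r.
Proof.
 intros HB Hx Hr [u [v [[k0 [Hk0 Hnz]] [Hu Hv]]]].
 set (m := fun j => sqrt (u j * u j + v j * v j)).
 assert (Hm : forall j, 0 <= m j) by (intros; apply sqrt_pos).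
 assert (Hm0 : 0 < m k0). { unfold m. apply sqrt_lt_R0. destruct Hnz; nra. }
 destruct (argmax K (fun j => m j / x j) ltac:(lia)) as [k [Hk Hmax]].
 set (t := m k / x k).
 assert (Ht : 0 < t). { assert (H := Hmax k0 Hk0). assert (0 < m k0 / x k0).
   apply Rdiv_lt_0_compat; auto. unfold t; lra. }
 assert (Hmt : forall j, (j < K)%nat -> m j <= t * x j).
 { intros j Hj. assert (H := Hmax j Hj). specialize (Hx j Hj).
   replace (m j) with ((m j / x j) * x j) by (field; nz). apply Rmult_le_compat_r; unfold t; lra. }
 assert (Hmk : m k = t * x k). { unfold t. field. specialize (Hx k Hk). nz. }
 assert (Hineq : sqrt (a * a + b * b) * m k <= rsum K (fun j => B k j * m j)).
 { unfold m at 1. rewrite <- mod_mult. rewrite <- (Hu k Hk), <- (Hv k Hk). unfold mxv.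
   eapply Rle_trans. apply norm_sum. apply rsum_le. intros j Hj.
   unfold m. assert (0 <= B k j) by (apply HB; auto).
   replace (B k j * sqrt (u j * u j + v j * v j)) with (sqrt (B k j * B k j) * sqrt (u j * u j + v j * v j)) by (rewrite sqrt_square; auto).
   rewrite <- sqrt_mult by nra. apply Req_le; f_equal; ring. }
 assert (rsum K (fun j => B k j * m j) <= t * mxv K B x k).
 { unfold mxv. rewrite <- rsum_scal. apply rsum_le. intros j Hj.
   assert (H := Hmt j Hj). assert (0 <= B k j) by (apply HB; auto). nra. }
 assert (t * mxv K B x k <= t * (r * x k)). { apply Rmult_le_compat_l. lra. apply Hr; auto. }
 assert (0 < m k) by (rewrite Hmk; specialize (Hx k Hk); nra).
 assert (sqrt (a * a + b * b) * m k <= r * m k) by (rewrite Hmk in *; nra).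
 apply (Rmult_le_reg_r (m k)); auto.
Qed.



Record Prob := {
  pK : nat; pN : nat; pC : nat -> nat -> R; pPh : nat -> R; pV : nat -> nat -> R;
  pz : nat -> R; pg : nat -> R; pbar : nat -> R;
  hK : (2 <= pK)%nat;
  hC01 : forall n k, (n < pN)%nat -> (k < pK)%nat -> pC n k = 0 \/ pC n k = 1;
  hPh : forall n, (n < pN)%nat -> 0 < pPh n;
  hVnn : forall i j, (i < pK)%nat -> (j < pK)%nat -> 0 <= pV i j;
  hVirr : irreducible pK pV;
  hz : forall k, (k < pK)%nat -> 0 < pz k;
  hg : forall k, (k < pK)%nat -> 0 < pg k;
  hP : inP pK pN pC pPh pbar;
  hmax : forall q, inP pK pN pC pPh q ->
     rmin pK (fun k => SIR pK pV pz q k / pg k) <= rmin pK (fun k => SIR pK pV pz pbar k / pg k)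
}.

Definition cs P := rmin (pK P) (fun k => SIR (pK P) (pV P) (pz P) (pbar P) k / pg P k).
Definition cn P n (x : nat -> R) := rsum (pK P) (fun j => pC P n j * x j).
Definition VTg P (y : nat -> R) k := rsum (pK P) (fun j => pV P j k * pg P j * y j).

Lemma rsum_const n c : rsum n (fun _ => c) = INR n * c.
Proof. induction n; simpl; [ring|]. rewrite IHn. destruct n; simpl; ring. Qed.


Lemma Vx_nonneg P x k : (k < pK P)%nat -> (forall j, (j < pK P)%nat -> 0 <= x j) ->
  0 <= mxv (pK P) (pV P) x k.
Proof. intros Hk Hx. apply rsum_nonneg. intros j Hj. apply Rmult_le_pos; [apply hVnn|apply Hx]; auto. Qed.

Lemma Vx_mono P x y k : (k < pK P)%nat -> (forall j, (j < pK P)%nat -> x j <= y j) ->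
  mxv (pK P) (pV P) x k <= mxv (pK P) (pV P) y k.
Proof. intros Hk Hx. apply rsum_le. intros j Hj. apply Rmult_le_compat_l; [apply hVnn|apply Hx]; auto. Qed.

Lemma den_pos P p k : (k < pK P)%nat -> (forall j, (j < pK P)%nat -> 0 <= p j) ->
  0 < mxv (pK P) (pV P) p k + pz P k.
Proof. intros Hk Hp. assert (H:=Vx_nonneg P p k Hk Hp). assert (H2:=hz P k Hk). lra. Qed.

Lemma sir_ge P p k c : (k < pK P)%nat -> (forall j, (j < pK P)%nat -> 0 <= p j) ->
  (c <= SIR (pK P) (pV P) (pz P) p k / pg P k <-> c * pg P k * (mxv (pK P) (pV P) p k + pz P k) <= p k).
Proof. intros Hk Hp. assert (Hd:=den_pos P p k Hk Hp). assert (Hg:=hg P k Hk). unfold SIR.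
 split; intros H.
 - apply (Rmult_le_compat_r (pg P k * (mxv (pK P) (pV P) p k + pz P k))) in H; [|apply Rmult_le_pos; lra].
   replace (p k / (mxv (pK P) (pV P) p k + pz P k) / pg P k * (pg P k * (mxv (pK P) (pV P) p k + pz P k))) with (p k) in H by (field; split; nz). lra.
 - replace c with (c * pg P k * (mxv (pK P) (pV P) p k + pz P k) / (mxv (pK P) (pV P) p k + pz P k) / pg P k) by (field; split; nz).
   unfold Rdiv. apply Rmult_le_compat_r. left; apply Rinv_0_lt_compat; lra.
   apply Rmult_le_compat_r. left; apply Rinv_0_lt_compat; lra. auto. Qed.

Lemma sir_gt P p k c : (k < pK P)%nat -> (forall j, (j < pK P)%nat -> 0 <= p j) ->
  (c < SIR (pK P) (pV P) (pz P) p k / pg P k <-> c * pg P k * (mxv (pK P) (pV P) p k + pz P k) < p k).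
Proof. intros Hk Hp. assert (Hd:=den_pos P p k Hk Hp). assert (Hg:=hg P k Hk). unfold SIR.
 assert (E : p k / (mxv (pK P) (pV P) p k + pz P k) / pg P k = p k * / (pg P k * (mxv (pK P) (pV P) p k + pz P k))) by (field; split; nz).
 rewrite E. assert (Hq : 0 < pg P k * (mxv (pK P) (pV P) p k + pz P k)) by (apply Rmult_lt_0_compat; lra).
 split; intros H.
 - apply (Rmult_lt_compat_r (pg P k * (mxv (pK P) (pV P) p k + pz P k))) in H; auto.
   rewrite Rmult_assoc, Rinv_l in H by nz. lra.
 - apply (Rmult_lt_reg_r (pg P k * (mxv (pK P) (pV P) p k + pz P k))); auto.
   rewrite Rmult_assoc, Rinv_l by nz. lra. Qed.

Lemma cs_pos P : 0 < cs P.
Proof.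
 assert (HK := hK P).
 destruct (fin_small (pN P) (fun n s => rsum (pK P) (fun j => pC P n j * s) <= pPh P n)) as [e [He Hs]].
 { intros n Hn. exists (pPh P n / INR (pK P)). assert (0 < INR (pK P)) by (apply lt_0_INR; lia).
   assert (Hp := hPh P n Hn). split. apply Rdiv_lt_0_compat; auto.
   intros s Hs0. eapply Rle_trans. apply (rsum_le _ _ (fun _ => s)).
   intros j Hj. destruct (hC01 P n j Hn Hj) as [->| ->]; lra.
   rewrite rsum_const. apply (Rmult_le_reg_r (/ INR (pK P))). apply Rinv_0_lt_compat; auto.
   replace (INR (pK P) * s * / INR (pK P)) with s by (field; nz). unfold Rdiv in Hs0. lra. }
 assert (Hq : inP (pK P) (pN P) (pC P) (pPh P) (fun _ => e)).
 { split. intros; lra. intros n Hn. apply Hs; auto; lra. }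
 eapply Rlt_le_trans; [|apply (hmax P _ Hq)].
 destruct (rmin_attained (pK P) (fun k => SIR (pK P) (pV P) (pz P) (fun _ => e) k / pg P k) ltac:(lia)) as [k [Hk ->]].
 unfold SIR. assert (0 < mxv (pK P) (pV P) (fun _ => e) k + pz P k) by (apply den_pos; auto; intros; lra).
 assert (Hg:=hg P k Hk). apply Rdiv_lt_0_compat; auto. apply Rdiv_lt_0_compat; auto. Qed.

Lemma pbar_nonneg P k : (k < pK P)%nat -> 0 <= pbar P k.
Proof. intros; apply (proj1 (hP P)); auto. Qed.

Lemma pbar_ge P k : (k < pK P)%nat ->
  cs P * pg P k * (mxv (pK P) (pV P) (pbar P) k + pz P k) <= pbar P k.
Proof. intros Hk. apply (sir_ge P (pbar P) k (cs P) Hk (pbar_nonneg P)).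
 unfold cs. exact (rmin_le (pK P) (fun k => SIR (pK P) (pV P) (pz P) (pbar P) k / pg P k) k Hk). Qed.

Lemma pbar_pos P k : (k < pK P)%nat -> 0 < pbar P k.
Proof. intros Hk. assert (H := pbar_ge P k Hk). assert (H1 := cs_pos P). assert (H2 := hg P k Hk).
 assert (H3 := den_pos P (pbar P) k Hk (pbar_nonneg P)).
 assert (0 < cs P * pg P k * (mxv (pK P) (pV P) (pbar P) k + pz P k)) by (repeat apply Rmult_lt_0_compat; auto). lra. Qed.

Lemma nonneg_right P x : (forall k, (k < pK P)%nat -> 0 <= x k - cs P * pg P k * mxv (pK P) (pV P) x k) ->
  forall k, (k < pK P)%nat -> 0 <= x k.
Proof.
 intros H. assert (HK := hK P).
 destruct (argmax (pK P) (fun j => - (x j / pbar P j)) ltac:(lia)) as [k [Hk Hmax]].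
 set (t := x k / pbar P k).
 assert (Hxt : forall j, (j < pK P)%nat -> t * pbar P j <= x j).
 { intros j Hj. assert (Hm := Hmax j Hj). assert (Hp := pbar_pos P j Hj).
   replace (x j) with ((x j / pbar P j) * pbar P j) by (field; nz).
   apply Rmult_le_compat_r; [lra|unfold t; lra]. }
 destruct (Rle_or_lt 0 t) as [Ht|Ht].
 - intros j Hj. assert (Hp := pbar_pos P j Hj). assert (H1 := Hxt j Hj).
   assert (0 <= t * pbar P j) by (apply Rmult_le_pos; lra). lra.
 - exfalso.
   assert (Hpk := pbar_pos P k Hk). assert (Hxk : x k = t * pbar P k) by (unfold t; field; nz).
   assert (Hv : t * mxv (pK P) (pV P) (pbar P) k <= mxv (pK P) (pV P) x k).
   { rewrite <- mxv_scal. apply Vx_mono; auto. }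
   assert (Hge := pbar_ge P k Hk). assert (Hc := cs_pos P). assert (Hg := hg P k Hk). assert (Hz := hz P k Hk).
   assert (Hs : cs P * pg P k * mxv (pK P) (pV P) (pbar P) k < pbar P k).
   { assert (0 < cs P * pg P k * pz P k) by (repeat apply Rmult_lt_0_compat; auto). nra. }
   specialize (H k Hk).
   assert (Hcg : 0 < cs P * pg P k) by (apply Rmult_lt_0_compat; auto).
   assert (cs P * pg P k * (t * mxv (pK P) (pV P) (pbar P) k) <= cs P * pg P k * mxv (pK P) (pV P) x k)
     by (apply Rmult_le_compat_l; lra).
   assert (t * (cs P * pg P k * mxv (pK P) (pV P) (pbar P) k) > t * pbar P k)
     by (apply Rmult_lt_gt_compat_neg_l; auto).
   nra.
Qed.

Lemma inj_right P x : (forall k, (k < pK P)%nat -> x k - cs P * pg P k * mxv (pK P) (pV P) x k = 0) ->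
  forall k, (k < pK P)%nat -> x k = 0.
Proof. intros H k Hk.
 assert (H1 := nonneg_right P x ltac:(intros; rewrite H; auto; lra) k Hk).
 assert (H2 := nonneg_right P (fun j => - x j)).
 assert (0 <= - x k). { apply H2; auto. intros j Hj.
   replace (fun j => - x j) with (fun j => (-1) * x j) by (apply functional_extensionality; intros; ring).
   rewrite mxv_scal. specialize (H j Hj). lra. }
 lra. Qed.

Lemma mxv_id_minus K (A : nat -> nat -> R) x i : (i < K)%nat ->
  mxv K (fun i j => (if Nat.eq_dec i j then 1 else 0) - A i j) x i = x i - mxv K A x i.
Proof. intros Hi. unfold mxv.
 rewrite (rsum_ext _ _ (fun j => (if Nat.eq_dec j i then x j else 0) - A i j * x j)).
 rewrite rsum_minus, rsum_single_f; auto.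
 intros j Hj. destruct (Nat.eq_dec i j); destruct (Nat.eq_dec j i); subst; try lia; ring. Qed.

Lemma solve_right P b : exists x, forall k, (k < pK P)%nat -> x k - cs P * pg P k * mxv (pK P) (pV P) x k = b k.
Proof.
 destruct (solve (pK P) (fun i j => (if Nat.eq_dec i j then 1 else 0) - cs P * pg P i * pV P i j)) with (b := b) as [x Hx].
 - intros x Hx. apply inj_right. intros k Hk. rewrite <- (Hx k Hk), mxv_id_minus by auto.
   f_equal. unfold mxv. rewrite <- rsum_scal. apply rsum_ext; intros; ring.
 - exists x. intros k Hk. rewrite <- (Hx k Hk), mxv_id_minus by auto.
   f_equal. unfold mxv. rewrite <- rsum_scal. apply rsum_ext; intros; ring.
Qed.

Lemma irr_right P d : (forall k, (k < pK P)%nat -> 0 <= d k) ->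
  (forall i j, (i < pK P)%nat -> (j < pK P)%nat -> pV P i j <> 0 -> 0 < d j -> 0 < d i) ->
  (exists k, (k < pK P)%nat /\ d k <> 0) -> forall k, (k < pK P)%nat -> 0 < d k.
Proof. intros Hd Hc [k0 [Hk0 Hnz]] k Hk.
 apply NNPP. intro Hn.
 destruct (hVirr P (fun j => 0 < d j)) as [i [j [Hi [Hj [Hni [Hsj HV]]]]]].
 - exists k0. split; auto. specialize (Hd k0 Hk0). destruct Hd; auto. congruence.
 - exists k. split; auto.
 - apply Hni. apply (Hc i j); auto. Qed.

Lemma irr_left P y : (forall k, (k < pK P)%nat -> 0 <= y k) ->
  (forall i j, (i < pK P)%nat -> (j < pK P)%nat -> pV P i j <> 0 -> 0 < y i -> 0 < y j) ->
  (exists k, (k < pK P)%nat /\ y k <> 0) -> forall k, (k < pK P)%nat -> 0 < y k.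
Proof. intros Hd Hc [k0 [Hk0 Hnz]] k Hk.
 apply NNPP. intro Hn.
 destruct (hVirr P (fun j => ~ 0 < y j)) as [i [j [Hi [Hj [Hni [Hsj HV]]]]]].
 - exists k. split; auto.
 - exists k0. split; auto. intro H; apply H. specialize (Hd k0 Hk0). destruct Hd; auto. congruence.
 - apply Hsj. apply (Hc i j); auto. apply NNPP; auto. Qed.

Lemma Vx_pos_of P d i j : (i < pK P)%nat -> (j < pK P)%nat -> pV P i j <> 0 -> 0 < d j ->
  (forall k, (k < pK P)%nat -> 0 <= d k) -> 0 < mxv (pK P) (pV P) d i.
Proof. intros Hi Hj HV Hdj Hd. apply rsum_pos.
 intros k Hk. apply Rmult_le_pos; [apply hVnn|apply Hd]; auto.
 exists j. split; auto. assert (0 <= pV P i j) by (apply hVnn; auto). apply Rmult_lt_0_compat; auto.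
 destruct H; auto. congruence. Qed.

Lemma noimp P p : inP (pK P) (pN P) (pC P) (pPh P) p ->
  ~ (forall k, (k < pK P)%nat -> cs P < SIR (pK P) (pV P) (pz P) p k / pg P k).
Proof. intros Hp H. assert (HK := hK P).
 destruct (rmin_attained (pK P) (fun k => SIR (pK P) (pV P) (pz P) p k / pg P k) ltac:(lia)) as [k [Hk Hr]].
 assert (H1 := hmax P p Hp). fold (cs P) in H1. specialize (H k Hk). simpl in Hr. lra. Qed.

Lemma scale P p : inP (pK P) (pN P) (pC P) (pPh P) p -> (forall k, (k < pK P)%nat -> 0 < p k) ->
  (forall n, (n < pN P)%nat -> cn P n p < pPh P n) ->
  exists p', inP (pK P) (pN P) (pC P) (pPh P) p' /\
     forall k, (k < pK P)%nat -> SIR (pK P) (pV P) (pz P) p k < SIR (pK P) (pV P) (pz P) p' k.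
Proof. intros Hp Hpos Hs.
 destruct (fin_small (pN P) (fun n s => (1 + s) * cn P n p <= pPh P n)) as [e [He Hsm]].
 { intros n Hn. specialize (Hs n Hn). assert (0 <= cn P n p).
   { apply rsum_nonneg. intros j Hj. apply Rmult_le_pos. destruct (hC01 P n j Hn Hj) as [->| ->]; lra. apply (proj1 Hp); auto. }
   destruct (Req_dec (cn P n p) 0) as [E|E].
   - exists 1. split; [lra|]. intros. rewrite E. assert (Hp0 := hPh P n Hn). lra.
   - exists ((pPh P n - cn P n p) / cn P n p). split. apply Rdiv_lt_0_compat; lra.
     intros s [Hs1 Hs2]. apply (Rmult_le_compat_r (cn P n p)) in Hs2; [|lra].
     replace ((pPh P n - cn P n p) / cn P n p * cn P n p) with (pPh P n - cn P n p) in Hs2 by (field; auto). lra. }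
 exists (fun j => (1 + e) * p j). split.
 - split. intros k Hk. specialize (Hpos k Hk). nra.
   intros n Hn. rewrite (rsum_ext _ _ (fun j => (1 + e) * (pC P n j * p j))) by (intros; ring).
   rewrite rsum_scal. apply Hsm; auto; lra.
 - intros k Hk. unfold SIR. rewrite mxv_scal.
   assert (Hd := den_pos P p k Hk ltac:(intros j Hj; specialize (Hpos j Hj); lra)).
   assert (Hv := Vx_nonneg P p k Hk ltac:(intros j Hj; specialize (Hpos j Hj); lra)).
   assert (Hz := hz P k Hk). specialize (Hpos k Hk).
   assert (0 < (1 + e) * mxv (pK P) (pV P) p k + pz P k) by nra.
   apply (Rmult_lt_reg_r ((mxv (pK P) (pV P) p k + pz P k) * ((1 + e) * mxv (pK P) (pV P) p k + pz P k))).
   apply Rmult_lt_0_compat; auto.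
   replace (p k / (mxv (pK P) (pV P) p k + pz P k) * ((mxv (pK P) (pV P) p k + pz P k) * ((1 + e) * mxv (pK P) (pV P) p k + pz P k)))
     with (p k * ((1 + e) * mxv (pK P) (pV P) p k + pz P k)) by (field; nz).
   replace ((1 + e) * p k / ((1 + e) * mxv (pK P) (pV P) p k + pz P k) * ((mxv (pK P) (pV P) p k + pz P k) * ((1 + e) * mxv (pK P) (pV P) p k + pz P k)))
     with ((1 + e) * p k * (mxv (pK P) (pV P) p k + pz P k)) by (field; nz).
   assert (0 < e * p k * pz P k) by (repeat apply Rmult_lt_0_compat; auto). nra.
Qed.

Lemma sir_eq P p k : (k < pK P)%nat -> (forall j, (j < pK P)%nat -> 0 <= p j) ->
  p k = cs P * pg P k * (mxv (pK P) (pV P) p k + pz P k) ->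
  SIR (pK P) (pV P) (pz P) p k / pg P k = cs P.
Proof. intros Hk Hp E. assert (Hd := den_pos P p k Hk Hp). assert (Hg := hg P k Hk).
 unfold SIR. rewrite E. field. split; nz. Qed.

Lemma exact_unique P : exists po,
  (forall k, (k < pK P)%nat -> po k - cs P * pg P k * mxv (pK P) (pV P) po k = cs P * pg P k * pz P k) /\
  (forall q, inP (pK P) (pN P) (pC P) (pPh P) q ->
     (forall k, (k < pK P)%nat -> cs P <= SIR (pK P) (pV P) (pz P) q k / pg P k) ->
     forall k, (k < pK P)%nat -> q k = po k).
Proof.
 destruct (solve_right P (fun k => cs P * pg P k * pz P k)) as [po Hpo].
 exists po. split; auto.
 assert (Hc := cs_pos P).
 assert (Hpo0 : forall k, (k < pK P)%nat -> 0 <= po k).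
 { apply nonneg_right. intros k Hk. rewrite Hpo by auto. assert (H1 := hg P k Hk). assert (H2 := hz P k Hk).
   assert (0 < cs P * pg P k * pz P k) by (repeat apply Rmult_lt_0_compat; auto). lra. }
 assert (Hpo1 : forall k, (k < pK P)%nat -> po k = cs P * pg P k * (mxv (pK P) (pV P) po k + pz P k)).
 { intros k Hk. specialize (Hpo k Hk). lra. }
 assert (Hpop : forall k, (k < pK P)%nat -> 0 < po k).
 { intros k Hk. rewrite Hpo1 by auto. assert (H1 := hg P k Hk). assert (H2 := den_pos P po k Hk Hpo0).
   repeat apply Rmult_lt_0_compat; auto. }
 intros q Hq Hsq.
 set (d := fun j => q j - po j).
 assert (Hd : forall k, (k < pK P)%nat -> 0 <= d k - cs P * pg P k * mxv (pK P) (pV P) d k).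
 { intros k Hk. unfold d. replace (fun j => q j - po j) with (fun j => q j + (-1) * po j) by (apply functional_extensionality; intros; ring).
   rewrite mxv_plus, mxv_scal. assert (H1 := proj1 (sir_ge P q k (cs P) Hk (proj1 Hq)) (Hsq k Hk)).
   specialize (Hpo k Hk). lra. }
 assert (Hd0 := nonneg_right P d Hd).
 destruct (classic (exists k, (k < pK P)%nat /\ d k <> 0)) as [Hex|Hno].
 - exfalso.
   assert (Hdp : forall k, (k < pK P)%nat -> 0 < d k).
   { apply irr_right; auto. intros i j Hi Hj HV Hdj.
     assert (H1 := Vx_pos_of P d i j Hi Hj HV Hdj Hd0). specialize (Hd i Hi).
     assert (H2 := hg P i Hi). assert (0 < cs P * pg P i * mxv (pK P) (pV P) d i) by (repeat apply Rmult_lt_0_compat; auto). lra. }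
   assert (Hin : inP (pK P) (pN P) (pC P) (pPh P) po).
   { split; auto. intros n Hn. apply Rle_trans with (rsum (pK P) (fun j => pC P n j * q j)); [|apply (proj2 Hq); auto].
     apply rsum_le. intros j Hj. specialize (Hdp j Hj). unfold d in Hdp.
     destruct (hC01 P n j Hn Hj) as [->| ->]; lra. }
   destruct (scale P po Hin Hpop) as [p' [Hp' Hlt]].
   { intros n Hn. destruct (classic (exists j, (j < pK P)%nat /\ pC P n j = 1)) as [[j [Hj Hc1]]|Hc0].
     - apply Rlt_le_trans with (rsum (pK P) (fun j => pC P n j * q j)); [|apply (proj2 Hq); auto].
       unfold cn. apply rsum_lt. intros i Hi. specialize (Hdp i Hi). unfold d in Hdp.
       destruct (hC01 P n i Hn Hi) as [->| ->]; lra.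
       exists j. split; auto. rewrite Hc1. specialize (Hdp j Hj). unfold d in Hdp. lra.
     - unfold cn. rewrite rsum_zero. apply hPh; auto. intros j Hj. destruct (hC01 P n j Hn Hj) as [->| E]; [ring|].
       exfalso; apply Hc0; exists j; auto. }
   apply (noimp P p' Hp'). intros k Hk. specialize (Hlt k Hk).
   rewrite <- (sir_eq P po k Hk Hpo0 (Hpo1 k Hk)). assert (Hg := hg P k Hk).
   unfold Rdiv. apply Rmult_lt_compat_r; auto. apply Rinv_0_lt_compat; auto.
 - intros k Hk. assert (d k = 0). { apply NNPP. intro. apply Hno. exists k; auto. }
   unfold d in H. lra.
Qed.

Lemma pbar_exact P : forall k, (k < pK P)%nat ->
  pbar P k = cs P * pg P k * (mxv (pK P) (pV P) (pbar P) k + pz P k).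
Proof. destruct (exact_unique P) as [po [Hpo Hu]].
 assert (E : forall k, (k < pK P)%nat -> pbar P k = po k).
 { apply Hu. apply hP. intros k Hk.
   exact (rmin_le (pK P) (fun k => SIR (pK P) (pV P) (pz P) (pbar P) k / pg P k) k Hk). }
 intros k Hk. rewrite (mxv_ext _ _ _ po) by auto. rewrite E by auto. specialize (Hpo k Hk). lra. Qed.

Lemma pbar_unique P q : inP (pK P) (pN P) (pC P) (pPh P) q ->
  (forall k, (k < pK P)%nat -> cs P <= SIR (pK P) (pV P) (pz P) q k / pg P k) ->
  forall k, (k < pK P)%nat -> q k = pbar P k.
Proof. destruct (exact_unique P) as [po [Hpo Hu]]. intros Hq Hs k Hk.
 rewrite (Hu q Hq Hs k Hk). symmetry. apply Hu. apply hP. intros j Hj.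
 exact (rmin_le (pK P) (fun k => SIR (pK P) (pV P) (pz P) (pbar P) k / pg P k) j Hj). auto. Qed.

Lemma sir_pbar P k : (k < pK P)%nat -> SIR (pK P) (pV P) (pz P) (pbar P) k / pg P k = cs P.
Proof. intros Hk. apply sir_eq; auto. apply pbar_nonneg. apply pbar_exact; auto. Qed.

Lemma tight_exists P : exists n, (n < pN P)%nat /\ cn P n (pbar P) = pPh P n.
Proof. apply NNPP. intro Hno.
 destruct (scale P (pbar P) (hP P) (pbar_pos P)) as [p' [Hp' Hlt]].
 { intros n Hn. assert (H := proj2 (hP P) n Hn). unfold cn. destruct H; auto.
   exfalso. apply Hno. exists n. auto. }
 apply (noimp P p' Hp'). intros k Hk. specialize (Hlt k Hk).
 rewrite <- (sir_pbar P k Hk). assert (Hg := hg P k Hk).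
 unfold Rdiv. apply Rmult_lt_compat_r; auto. apply Rinv_0_lt_compat; auto. Qed.



Definition rhoP P := / cs P.

Lemma rhoP_pos P : 0 < rhoP P.
Proof. unfold rhoP. apply Rinv_0_lt_compat, cs_pos. Qed.

Lemma pbar_rho P k : (k < pK P)%nat ->
  pg P k * mxv (pK P) (pV P) (pbar P) k = rhoP P * pbar P k - pg P k * pz P k.
Proof. intros Hk. rewrite (pbar_exact P k Hk). unfold rhoP. assert (H := cs_pos P).
 field. nz. Qed.

Lemma mxv_B P n x k :
  mxv (pK P) (Bmat (pV P) (pz P) (pg P) (pC P) (pPh P) n) x k =
  pg P k * mxv (pK P) (pV P) x k + / pPh P n * (pg P k * pz P k * cn P n x).
Proof. unfold mxv, Bmat, cn.
 rewrite (rsum_ext _ _ (fun j => pg P k * (pV P k j * x j) + / pPh P n * (pg P k * pz P k * (pC P n j * x j)))) by (intros; ring).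
 rewrite rsum_plus, !rsum_scal. auto. Qed.

Lemma mxv_BT P n y k :
  mxv (pK P) (trmx (Bmat (pV P) (pz P) (pg P) (pC P) (pPh P) n)) y k =
  VTg P y k + pC P n k * / pPh P n * rsum (pK P) (fun j => pg P j * pz P j * y j).
Proof. unfold mxv, trmx, Bmat, VTg.
 rewrite (rsum_ext _ _ (fun j => pV P j k * pg P j * y j + pC P n k * / pPh P n * (pg P j * pz P j * y j))) by (intros; ring).
 rewrite rsum_plus, !rsum_scal. auto. Qed.

Lemma cn_nonneg P n x : (n < pN P)%nat -> (forall j, (j < pK P)%nat -> 0 <= x j) -> 0 <= cn P n x.
Proof. intros Hn Hx. apply rsum_nonneg. intros j Hj. apply Rmult_le_pos; auto.
 destruct (hC01 P n j Hn Hj) as [->| ->]; lra. Qed.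

Lemma B_nonneg P n i j : (n < pN P)%nat -> (i < pK P)%nat -> (j < pK P)%nat ->
  0 <= Bmat (pV P) (pz P) (pg P) (pC P) (pPh P) n i j.
Proof. intros Hn Hi Hj. unfold Bmat. assert (H1 := hg P i Hi). assert (H2 := hVnn P i j Hi Hj).
 assert (H3 := hz P i Hi). assert (H4 := hPh P n Hn). assert (0 <= pC P n j) by (destruct (hC01 P n j Hn Hj) as [->| ->]; lra).
 assert (0 < / pPh P n) by (apply Rinv_0_lt_compat; auto).
 apply Rplus_le_le_0_compat. apply Rmult_le_pos; lra. apply Rmult_le_pos. lra.
 apply Rmult_le_pos; [|lra]. apply Rmult_le_pos; lra. Qed.

Lemma B_pbar_le P n k : (n < pN P)%nat -> (k < pK P)%nat ->
  mxv (pK P) (Bmat (pV P) (pz P) (pg P) (pC P) (pPh P) n) (pbar P) k <= rhoP P * pbar P k.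
Proof. intros Hn Hk. rewrite mxv_B. rewrite pbar_rho by auto.
 assert (H := proj2 (hP P) n Hn). fold (cn P n (pbar P)) in H. assert (Hp := hPh P n Hn).
 assert (H1 := hg P k Hk). assert (H3 := hz P k Hk). assert (Hc := cn_nonneg P n (pbar P) Hn (pbar_nonneg P)).
 assert (/ pPh P n * (pg P k * pz P k * cn P n (pbar P)) <= pg P k * pz P k).
 { replace (/ pPh P n * (pg P k * pz P k * cn P n (pbar P))) with (pg P k * pz P k * (cn P n (pbar P) / pPh P n)) by (field; nz).
   rewrite <- (Rmult_1_r (pg P k * pz P k)) at 2. apply Rmult_le_compat_l. apply Rmult_le_pos; lra.
   apply (Rmult_le_reg_r (pPh P n)); auto. replace (cn P n (pbar P) / pPh P n * pPh P n) with (cn P n (pbar P)) by (field; nz). lra. }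
 lra. Qed.

Lemma B_pbar_eq P n k : (n < pN P)%nat -> (k < pK P)%nat -> cn P n (pbar P) = pPh P n ->
  mxv (pK P) (Bmat (pV P) (pz P) (pg P) (pC P) (pPh P) n) (pbar P) k = rhoP P * pbar P k.
Proof. intros Hn Hk E. rewrite mxv_B, E. rewrite pbar_rho by auto. assert (Hp := hPh P n Hn). field. nz. Qed.

Lemma rho_le P n r : (n < pN P)%nat -> is_spectral_radius (pK P) (Bmat (pV P) (pz P) (pg P) (pC P) (pPh P) n) r ->
  r <= rhoP P.
Proof. intros Hn [[a [b [He Hs]]] _]. rewrite <- Hs. eapply spec_bound; eauto.
 intros; apply B_nonneg; auto. apply pbar_pos. intros; apply B_pbar_le; auto. Qed.

Lemma rho_tight P n r : (n < pN P)%nat -> cn P n (pbar P) = pPh P n ->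
  is_spectral_radius (pK P) (Bmat (pV P) (pz P) (pg P) (pC P) (pPh P) n) r -> r = rhoP P.
Proof. intros Hn E Hr. apply Rle_antisym. eapply rho_le; eauto.
 destruct Hr as [_ Hr]. assert (HK := hK P).
 assert (H := Hr (rhoP P) 0).
 replace (rhoP P * rhoP P + 0 * 0) with (rhoP P * rhoP P) in H by ring.
 rewrite sqrt_square in H by (left; apply rhoP_pos). apply H.
 exists (pbar P), (fun _ => 0). split; [|split].
 - exists 0%nat. split. lia. left. assert (H0 := pbar_pos P 0 ltac:(lia)). nz.
 - intros i Hi. rewrite B_pbar_eq by auto. ring.
 - intros i Hi. replace (fun _ : nat => 0) with (fun _ : nat => 0 * 0) by (apply functional_extensionality; intros; ring).
   rewrite mxv_scal. ring.
Qed.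

Lemma dual_id P y : rsum (pK P) (fun k => pbar P k * VTg P y k) =
  rsum (pK P) (fun j => pg P j * y j * mxv (pK P) (pV P) (pbar P) j).
Proof. unfold VTg, mxv.
 rewrite (rsum_ext _ _ (fun k => rsum (pK P) (fun j => pbar P k * (pV P j k * pg P j * y j)))) by (intros; rewrite rsum_scal; auto).
 rewrite rsum_swap. apply rsum_ext. intros j Hj. rewrite <- rsum_scal. apply rsum_ext. intros; ring. Qed.

Lemma dual_id2 P y : rsum (pK P) (fun k => pbar P k * (rhoP P * y k - VTg P y k)) =
  rsum (pK P) (fun j => pg P j * pz P j * y j).
Proof.
 rewrite (rsum_ext _ _ (fun k => rhoP P * pbar P k * y k - pbar P k * VTg P y k)) by (intros; ring).
 rewrite rsum_minus, dual_id, <- rsum_minus. apply rsum_ext. intros j Hj.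
 replace (pg P j * y j * mxv (pK P) (pV P) (pbar P) j) with (y j * (pg P j * mxv (pK P) (pV P) (pbar P) j)) by ring.
 rewrite pbar_rho by auto. ring. Qed.


Lemma VTg_mono P x y k : (k < pK P)%nat -> (forall j, (j < pK P)%nat -> x j <= y j) -> VTg P x k <= VTg P y k.
Proof. intros Hk H. unfold VTg. apply rsum_le. intros j Hj. apply Rmult_le_compat_l; auto.
 apply Rmult_le_pos. apply hVnn; auto. left; apply hg; auto. Qed.

Lemma VTg_lin P a x b y k : VTg P (fun j => a * x j + b * y j) k = a * VTg P x k + b * VTg P y k.
Proof. unfold VTg. rewrite <- !rsum_scal, <- rsum_plus. apply rsum_ext; intros; ring. Qed.

Lemma nonneg_left P y : (forall k, (k < pK P)%nat -> 0 <= rhoP P * y k - VTg P y k) ->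
  forall k, (k < pK P)%nat -> 0 <= y k.
Proof.
 intros H. set (ym := fun j => Rmax 0 (- y j)).
 assert (Hym : forall j, 0 <= ym j) by (intros; apply Rmax_l).
 assert (Hym2 : forall j, - y j <= ym j) by (intros; apply Rmax_r).
 assert (Hr := rhoP_pos P).
 assert (Hk1 : forall k, (k < pK P)%nat -> rhoP P * ym k <= VTg P ym k).
 { intros k Hk. unfold ym at 1. unfold Rmax. destruct (Rle_dec 0 (- y k)).
   - specialize (H k Hk). assert (VTg P (fun j => (-1) * y j + 0 * y j) k <= VTg P ym k).
     { apply VTg_mono; auto. intros j Hj. specialize (Hym2 j). lra. }
     rewrite VTg_lin in H0. lra.
   - rewrite Rmult_0_r. unfold VTg. apply rsum_nonneg. intros j Hj. apply Rmult_le_pos; auto.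
     apply Rmult_le_pos. apply hVnn; auto. left; apply hg; auto. }
 assert (Hs : rsum (pK P) (fun j => pg P j * pz P j * ym j) <= 0).
 { rewrite <- dual_id2. replace 0 with (rsum (pK P) (fun _ => 0)) by (apply rsum_zero; auto).
   apply rsum_le. intros k Hk. specialize (Hk1 k Hk). assert (H1 := pbar_pos P k Hk).
   assert (pbar P k * (rhoP P * ym k - VTg P ym k) <= 0). { assert (0 <= pbar P k * (VTg P ym k - rhoP P * ym k)) by (apply Rmult_le_pos; lra). lra. } lra. }
 intros k Hk. destruct (Rle_or_lt 0 (y k)); auto. exfalso.
 assert (0 < rsum (pK P) (fun j => pg P j * pz P j * ym j)).
 { apply rsum_pos. intros j Hj. apply Rmult_le_pos; auto. apply Rmult_le_pos; left; [apply hg|apply hz]; auto.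
   exists k. split; auto. apply Rmult_lt_0_compat. apply Rmult_lt_0_compat; [apply hg|apply hz]; auto.
   specialize (Hym2 k). lra. }
 lra.
Qed.

Lemma inj_left P y : (forall k, (k < pK P)%nat -> rhoP P * y k - VTg P y k = 0) ->
  forall k, (k < pK P)%nat -> y k = 0.
Proof. intros H k Hk.
 assert (H1 := nonneg_left P y ltac:(intros; rewrite H; auto; lra) k Hk).
 assert (0 <= (-1) * y k + 0 * y k). { apply (nonneg_left P (fun j => (-1) * y j + 0 * y j)); auto. intros j Hj.
   rewrite VTg_lin. specialize (H j Hj). lra. }
 lra. Qed.

Lemma solve_left P b : exists y, forall k, (k < pK P)%nat -> rhoP P * y k - VTg P y k = b k.
Proof.
 assert (Hc := cs_pos P).
 assert (Hm : forall y i, (i < pK P)%nat ->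
   mxv (pK P) (fun i j => (if Nat.eq_dec i j then 1 else 0) - cs P * (pV P j i * pg P j)) y i = cs P * (rhoP P * y i - VTg P y i)).
 { intros y i Hi. rewrite mxv_id_minus by auto. unfold mxv, VTg.
   unfold rhoP. rewrite Rmult_minus_distr_l. rewrite <- Rmult_assoc, Rinv_r by nz. rewrite Rmult_1_l.
   rewrite <- rsum_scal. f_equal. apply rsum_ext; intros; ring. }
 destruct (solve (pK P) (fun i j => (if Nat.eq_dec i j then 1 else 0) - cs P * (pV P j i * pg P j))) with (b := fun k => cs P * b k) as [y Hy].
 - intros y Hy. apply inj_left. intros k Hk. specialize (Hy k Hk). rewrite Hm in Hy by auto.
   apply (Rmult_eq_reg_l (cs P)). lra. nz.
 - exists y. intros k Hk. specialize (Hy k Hk). rewrite Hm in Hy by auto.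
   apply (Rmult_eq_reg_l (cs P)). lra. nz.
Qed.

Definition Yf P : nat -> nat -> R := fun n =>
  proj1_sig (constructive_indefinite_description _ (solve_left P (fun k => pC P n k))).

Lemma Yf_spec P n k : (k < pK P)%nat -> rhoP P * Yf P n k - VTg P (Yf P n) k = pC P n k.
Proof. unfold Yf. destruct (constructive_indefinite_description _ _) as [y Hy]. simpl. auto. Qed.

Lemma Yf_nonneg P n k : (n < pN P)%nat -> (k < pK P)%nat -> 0 <= Yf P n k.
Proof. intros Hn. apply nonneg_left. intros j Hj. rewrite Yf_spec by auto.
 destruct (hC01 P n j Hn Hj) as [->| ->]; lra. Qed.

Lemma tight_C P n : (n < pN P)%nat -> cn P n (pbar P) = pPh P n -> exists j, (j < pK P)%nat /\ pC P n j = 1.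
Proof. intros Hn E. apply NNPP. intro Hno. assert (Hp := hPh P n Hn).
 assert (cn P n (pbar P) = 0). { apply rsum_zero. intros j Hj. destruct (hC01 P n j Hn Hj) as [->| E1]. ring.
   exfalso; apply Hno; exists j; auto. }
 lra. Qed.

Lemma Yf_pos P n k : (n < pN P)%nat -> cn P n (pbar P) = pPh P n -> (k < pK P)%nat -> 0 < Yf P n k.
Proof. intros Hn E. apply irr_left.
 - intros; apply Yf_nonneg; auto.
 - intros i j Hi Hj HV Hyi. assert (Hs := Yf_spec P n j Hj).
   assert (0 <= pC P n j) by (destruct (hC01 P n j Hn Hj) as [->| ->]; lra).
   assert (0 < VTg P (Yf P n) j).
   { unfold VTg. apply rsum_pos. intros l Hl. apply Rmult_le_pos. apply Rmult_le_pos. apply hVnn; auto. left; apply hg; auto.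
     apply Yf_nonneg; auto.
     exists i. split; auto. apply Rmult_lt_0_compat; auto. apply Rmult_lt_0_compat. 2: apply hg; auto.
     assert (H0 := hVnn P i j Hi Hj). destruct H0; auto. congruence. }
   assert (Hr := rhoP_pos P).
   assert (0 < rhoP P * Yf P n j) by lra.
   apply (Rmult_lt_reg_l (rhoP P)); auto. lra.
 - destruct (tight_C P n Hn E) as [j [Hj Hc]]. apply NNPP. intro Hall.
   assert (Hz : forall l, (l < pK P)%nat -> Yf P n l = 0).
   { intros l Hl. apply NNPP. intro. apply Hall. exists l; auto. }
   assert (Hs := Yf_spec P n j Hj). rewrite Hc, Hz in Hs by auto.
   assert (VTg P (Yf P n) j = 0). { apply rsum_zero. intros l Hl. rewrite Hz by auto. ring. }
   lra.
Qed.

Definition sgm P n := rsum (pK P) (fun k => Yf P n k * pbar P k).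

Lemma sgm_pos P n : (n < pN P)%nat -> cn P n (pbar P) = pPh P n -> 0 < sgm P n.
Proof. intros Hn E. assert (HK := hK P). apply rsum_pos.
 intros k Hk. apply Rmult_le_pos. apply Yf_nonneg; auto. apply pbar_nonneg; auto.
 exists 0%nat. split. lia. apply Rmult_lt_0_compat. apply Yf_pos; auto; lia. apply pbar_pos; lia. Qed.

Definition Xf P n := fun k => pbar P k / sgm P n.

Lemma eig_tight P n : (n < pN P)%nat -> cn P n (pbar P) = pPh P n ->
  (forall k, (k < pK P)%nat -> 0 < Xf P n k) /\
  (forall k, (k < pK P)%nat -> 0 < Yf P n k) /\
  (forall k, (k < pK P)%nat -> mxv (pK P) (Bmat (pV P) (pz P) (pg P) (pC P) (pPh P) n) (Xf P n) k = rhoP P * Xf P n k) /\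
  (forall k, (k < pK P)%nat -> mxv (pK P) (trmx (Bmat (pV P) (pz P) (pg P) (pC P) (pPh P) n)) (Yf P n) k = rhoP P * Yf P n k) /\
  rsum (pK P) (fun k => Yf P n k * Xf P n k) = 1.
Proof. intros Hn E. assert (Hs := sgm_pos P n Hn E). split; [|split; [|split; [|split]]].
 - intros k Hk. unfold Xf. apply Rdiv_lt_0_compat; auto. apply pbar_pos; auto.
 - intros; apply Yf_pos; auto.
 - intros k Hk. unfold Xf. replace (fun k => pbar P k / sgm P n) with (fun k => / sgm P n * pbar P k)
     by (apply functional_extensionality; intros; field; nz).
   rewrite mxv_scal, B_pbar_eq by auto. field. nz.
 - intros k Hk. rewrite mxv_BT.
   assert (rsum (pK P) (fun j => pg P j * pz P j * Yf P n j) = pPh P n).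
   { rewrite <- dual_id2. rewrite <- E. unfold cn. apply rsum_ext. intros j Hj. rewrite Yf_spec by auto. ring. }
   rewrite H. assert (Hp := hPh P n Hn). assert (H1 := Yf_spec P n k Hk).
   replace (pC P n k * / pPh P n * pPh P n) with (pC P n k) by (field; nz). lra.
 - unfold Xf. rewrite (rsum_ext _ _ (fun k => Yf P n k * pbar P k * / sgm P n)) by (intros; unfold Rdiv; ring).
   rewrite rsum_scal_r. fold (sgm P n). field. nz.
Qed.



Lemma ln_le_m1 y : 0 < y -> ln y <= y - 1.
Proof. intros Hy. assert (H := exp_ineq1_le (ln y)). rewrite exp_ln in H by auto. lra. Qed.

Lemma phi_cont phi : A2 phi -> forall x, 0 < x -> continuity_pt phi x.
Proof. intros [[d [Hd _]] _] x Hx. apply derivable_continuous_pt. exists (d x). apply Hd; auto. Qed.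

Lemma phi_le phi : A2 phi -> forall x y, 0 < x -> x <= y -> phi x <= phi y.
Proof. intros [_ Hi] x y Hx Hxy. destruct Hxy. left; apply Hi; auto. subst; lra. Qed.

Lemma phi_le_inv phi : A2 phi -> forall x y, 0 < x -> 0 < y -> phi x <= phi y -> x <= y.
Proof. intros [_ Hi] x y Hx Hy H. destruct (Rle_or_lt x y); auto. assert (phi y < phi x) by (apply Hi; auto). lra. Qed.

Lemma F2 phi : A2 phi -> A3 phi -> forall a b t, 0 <= t <= 1 ->
  t * phi (exp a) + (1 - t) * phi (exp b) <= phi (exp (t * a + (1 - t) * b)).
Proof.
 intros H2 H3 a b t Ht.
 set (x := exp a). set (y := exp b). set (m := exp (t * a + (1 - t) * b)).
 assert (Hx : 0 < x) by apply exp_pos. assert (Hy : 0 < y) by apply exp_pos. assert (Hm : 0 < m) by apply exp_pos.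
 assert (Hlm : ln m = t * ln x + (1 - t) * ln y) by (unfold m, x, y; rewrite !ln_exp; auto).
 clearbody x y m.
 set (q := t * phi x + (1 - t) * phi y).
 destruct (Rle_or_lt q (phi m)) as [Hq|Hq]; auto. exfalso.
 set (M := Rmax x y).
 assert (HM : 0 < M) by (unfold M; apply Rlt_le_trans with x; [auto|apply Rmax_l]).
 assert (HqM : q <= phi M).
 { assert (phi x <= phi M) by (apply (phi_le phi H2); auto; apply Rmax_l).
   assert (phi y <= phi M) by (apply (phi_le phi H2); auto; apply Rmax_r).
   unfold q. nra. }
 assert (Hcontra : forall u, 0 < u -> phi u = q -> False).
 { intros u Hu Hpu. assert (Hl := H3 x y u t Hx Hy Hu Ht Hpu). rewrite <- Hlm in Hl.
   assert (u <= m). { destruct (Rle_or_lt u m); auto. assert (ln m < ln u) by (apply ln_increasing; auto). lra. }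
   assert (phi u <= phi m) by (apply (phi_le phi H2); auto). lra. }
 destruct HqM as [HqM|HqM].
 - assert (Hmm : m < M). { destruct (Rle_or_lt M m); auto. assert (phi M <= phi m) by (apply (phi_le phi H2); auto). lra. }
   destruct (IVT_interv (fun s => phi s - q) m M) as [u [Hu Hpu]]; auto.
   + intros s Hs. change (continuity_pt (phi - fct_cte q)%F s). apply continuity_pt_minus. apply phi_cont; auto; lra. apply continuity_pt_const. intros ? ?; auto.
   + simpl. lra.
   + simpl. lra.
   + apply (Hcontra u). lra. simpl in Hpu. lra.
 - apply (Hcontra M HM). auto.
Qed.

Lemma Fconc phi : A2 phi -> A3 phi -> forall n (w s : nat -> R), (1 <= n)%nat ->
  (forall k, (k < n)%nat -> 0 < w k) -> rsum n w = 1 ->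
  rsum n (fun k => w k * phi (exp (s k))) <= phi (exp (rsum n (fun k => w k * s k))).
Proof.
 intros H2 H3 n. induction n; intros w s Hn Hw Hs; [lia|]. destruct n.
 - simpl in *. replace (w 0%nat) with 1 by lra. replace (0 + 1 * s 0%nat) with (s 0%nat) by ring. lra.
 - set (W := rsum (S n) w).
   assert (HW : 0 < W). { apply rsum_pos. intros; left; apply Hw; lia. exists 0%nat; split; [lia|apply Hw; lia]. }
   assert (Hwn := Hw (S n) ltac:(lia)).
   assert (HW1 : W + w (S n) = 1) by (unfold W; rewrite <- Hs; reflexivity).
   assert (IH := IHn (fun k => w k / W) s ltac:(lia)).
   rewrite rsum_S. rewrite (rsum_S (S n) (fun k => w k * s k)).
   assert (E1 : rsum (S n) (fun k => w k * phi (exp (s k))) = W * rsum (S n) (fun k => w k / W * phi (exp (s k)))).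
   { rewrite <- rsum_scal. apply rsum_ext. intros. field. nz. }
   assert (E2 : rsum (S n) (fun k => w k * s k) = W * rsum (S n) (fun k => w k / W * s k)).
   { rewrite <- rsum_scal. apply rsum_ext. intros. field. nz. }
   rewrite E1, E2.
   assert (IH' : rsum (S n) (fun k => w k / W * phi (exp (s k))) <= phi (exp (rsum (S n) (fun k => w k / W * s k)))).
   { apply IH; [intros k Hk; apply Rdiv_lt_0_compat; [apply Hw; lia| auto] | unfold Rdiv; rewrite rsum_scal_r; fold W; field; nz]. }
   assert (HF := F2 phi H2 H3 (rsum (S n) (fun k => w k / W * s k)) (s (S n)) W ltac:(lra)).
   replace (1 - W) with (w (S n)) in HF by lra. nra.
Qed.

Lemma dphi_pos phi dphi : (forall x, 0 < x -> derivable_pt_lim phi x (dphi x)) -> A2 phi -> A3 phi ->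
  forall x0, 0 < x0 -> 0 < dphi x0.
Proof.
 intros Hd H2 H3 x0 Hx0.
 destruct (Rle_or_lt (dphi x0) 0) as [Hle|]; auto. exfalso.
 destruct H2 as [Hex Hi].
 set (x2 := 2 * x0). assert (Hq : phi x0 < phi x2) by (apply Hi; unfold x2; lra).
 set (kap := ln 2 / (phi x2 - phi x0)).
 assert (Hl2 : 0 < ln 2) by (rewrite <- ln_1; apply ln_increasing; lra).
 assert (Hk : 0 < kap) by (apply Rdiv_lt_0_compat; lra).
 assert (Key : forall h, 0 < h -> h < x0 -> h / (x0 + h) <= kap * (phi (x0 + h) - phi x0)).
 { intros h Hh Hhx. set (x := x0 + h).
   assert (Hxx : phi x < phi x2) by (apply Hi; unfold x, x2; lra).
   assert (Hx0x : phi x0 < phi x) by (apply Hi; unfold x; lra).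
   set (t := (phi x2 - phi x) / (phi x2 - phi x0)).
   assert (Ht : 0 <= t <= 1). { unfold t. split. unfold Rdiv; apply Rmult_le_pos; [lra|left; apply Rinv_0_lt_compat; lra].
     apply (Rmult_le_reg_r (phi x2 - phi x0)). lra. replace ((phi x2 - phi x) / (phi x2 - phi x0) * (phi x2 - phi x0)) with (phi x2 - phi x) by (field; nz). lra. }
   assert (Hphi : phi x = t * phi x0 + (1 - t) * phi x2) by (unfold t; field; nz).
   assert (HA := H3 x0 x2 x t Hx0 ltac:(unfold x2; lra) ltac:(unfold x; lra) Ht Hphi).
   assert (Hln2 : ln x2 = ln 2 + ln x0) by (unfold x2; apply ln_mult; lra).
   assert (H1t : 1 - t = (phi x - phi x0) / (phi x2 - phi x0)) by (unfold t; field; nz).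
   assert (Hlow : h / x <= ln x - ln x0).
   { assert (H := ln_le_m1 (x0 / x) ltac:(apply Rdiv_lt_0_compat; unfold x; lra)).
     assert (Hl : ln (x0 / x) = ln x0 - ln x).
     { unfold Rdiv. rewrite ln_mult, ln_Rinv. ring. unfold x; lra. auto. apply Rinv_0_lt_compat; unfold x; lra. }
     rewrite Hl in H. replace (h / x) with (1 - x0 / x) by (unfold x; field; nz). lra. }
   assert (ln x - ln x0 <= (1 - t) * ln 2) by (rewrite Hln2 in HA; nra).
   rewrite H1t in H. unfold kap. replace (ln 2 / (phi x2 - phi x0) * (phi x - phi x0)) with ((phi x - phi x0) / (phi x2 - phi x0) * ln 2) by (field; nz).
   lra. }
 assert (He : 0 < / (4 * x0 * kap)) by (apply Rinv_0_lt_compat; nra).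
 destruct (Hd x0 Hx0 (/ (4 * x0 * kap)) He) as [del Hdel].
 set (h := Rmin (del / 2) (x0 / 2)).
 assert (Hh : 0 < h) by (unfold h; apply Rmin_glb_lt; [apply Rdiv_lt_0_compat; [apply (cond_pos del)|lra]|lra]).
 assert (Hh1 : h <= del / 2) by apply Rmin_l. assert (Hh2 : h <= x0 / 2) by apply Rmin_r.
 assert (Hdp := cond_pos del).
 specialize (Hdel h ltac:(nz) ltac:(rewrite Rabs_right; lra)).
 apply Rabs_def2 in Hdel. destruct Hdel as [Hd1 _].
 assert (Hdq : (phi (x0 + h) - phi x0) / h < / (4 * x0 * kap)) by lra.
 assert (Hdq' : phi (x0 + h) - phi x0 < h * / (4 * x0 * kap)).
 { apply (Rmult_lt_compat_l h) in Hdq; auto. replace (h * ((phi (x0 + h) - phi x0) / h)) with (phi (x0 + h) - phi x0) in Hdq by (field; nz). auto. }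
 assert (HK := Key h Hh ltac:(lra)).
 assert (E : kap * (h * / (4 * x0 * kap)) = h / (4 * x0)) by (field; split; nz).
 assert (h / (x0 + h) < h / (4 * x0)).
 { rewrite <- E. apply Rle_lt_trans with (kap * (phi (x0 + h) - phi x0)); auto. apply Rmult_lt_compat_l; auto. }
 assert (h / (4 * x0) < h / (x0 + h)).
 { apply Rmult_lt_compat_l; auto. apply Rinv_lt_contravar. nra. lra. }
 lra.
Qed.



Lemma ln_div' a b : 0 < a -> 0 < b -> ln (a / b) = ln a - ln b.
Proof. intros. unfold Rdiv. rewrite ln_mult, ln_Rinv; [ring|auto|auto|apply Rinv_0_lt_compat; auto]. Qed.

Lemma jensen_ln n (pi a : nat -> R) : (forall j, (j < n)%nat -> 0 <= pi j) -> rsum n pi = 1 ->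
  (forall j, (j < n)%nat -> 0 < a j) ->
  0 < rsum n (fun j => pi j * a j) /\ rsum n (fun j => pi j * ln (a j)) <= ln (rsum n (fun j => pi j * a j)).
Proof.
 intros Hp Hs Ha.
 assert (Hm : 0 < rsum n (fun j => pi j * a j)).
 { apply rsum_pos. intros j Hj. apply Rmult_le_pos; [auto|left; auto].
   apply NNPP. intro Hno. assert (rsum n pi = 0).
   { apply rsum_zero. intros j Hj. destruct (Hp j Hj); auto. exfalso; apply Hno. exists j. split; auto.
     apply Rmult_lt_0_compat; auto. }
   lra. }
 split; auto. set (m := rsum n (fun j => pi j * a j)).
 assert (rsum n (fun j => pi j * ln (a j)) - ln m = rsum n (fun j => pi j * ln (a j / m))).
 { rewrite <- (Rmult_1_l (ln m)). rewrite <- Hs, <- rsum_scal_r, <- rsum_minus. apply rsum_ext.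
   intros j Hj. rewrite ln_div' by auto. ring. }
 assert (rsum n (fun j => pi j * ln (a j / m)) <= rsum n (fun j => pi j * (a j / m - 1))).
 { apply rsum_le. intros j Hj. apply Rmult_le_compat_l; auto. apply ln_le_m1. apply Rdiv_lt_0_compat; auto. }
 assert (rsum n (fun j => pi j * (a j / m - 1)) = 0).
 { rewrite (rsum_ext _ _ (fun j => pi j * a j * / m - pi j)) by (intros; unfold Rdiv; ring).
   rewrite rsum_minus, rsum_scal_r, Hs. fold m. rewrite Rinv_r by (unfold m; nz). ring. }
 lra.
Qed.

Lemma FK K (B : nat -> nat -> R) x y r p :
  (forall i j, (i < K)%nat -> (j < K)%nat -> 0 <= B i j) ->
  (forall k, (k < K)%nat -> 0 < x k) -> (forall k, (k < K)%nat -> 0 < y k) ->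
  (forall k, (k < K)%nat -> 0 < p k) -> 0 < r ->
  (forall k, (k < K)%nat -> mxv K B x k = r * x k) ->
  (forall k, (k < K)%nat -> mxv K (trmx B) y k = r * y k) ->
  rsum K (fun k => y k * x k) = 1 ->
  (forall k, (k < K)%nat -> 0 < mxv K B p k) /\
  ln r <= rsum K (fun k => y k * x k * ln (mxv K B p k / p k)).
Proof.
 intros HB Hx Hy Hp Hr Ex Ey Hyx.
 set (rr := fun j => p j / x j).
 assert (Hrr : forall j, (j < K)%nat -> 0 < rr j) by (intros; unfold rr; apply Rdiv_lt_0_compat; auto).
 set (pi := fun k j => B k j * x j / (r * x k)).
 assert (Hpi0 : forall k j, (k < K)%nat -> (j < K)%nat -> 0 <= pi k j).
 { intros k j Hk Hj. unfold pi. unfold Rdiv. apply Rmult_le_pos. apply Rmult_le_pos; [auto|left; auto].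
   left; apply Rinv_0_lt_compat. apply Rmult_lt_0_compat; auto. }
 assert (Hpi1 : forall k, (k < K)%nat -> rsum K (pi k) = 1).
 { intros k Hk. unfold pi. unfold Rdiv. rewrite rsum_scal_r. fold (mxv K B x k). rewrite Ex by auto.
   field. split; [specialize (Hx k Hk)|]; nz. }
 assert (HA : forall k, (k < K)%nat -> mxv K B p k / p k = r * rsum K (fun j => pi k j * (rr j / rr k))).
 { intros k Hk. unfold mxv. rewrite <- rsum_scal. unfold Rdiv at 1. rewrite <- rsum_scal_r. apply rsum_ext.
   intros j Hj. unfold pi, rr. assert (Hxk := Hx k Hk). assert (Hxj := Hx j Hj). assert (Hpk := Hp k Hk). assert (Hpj := Hp j Hj).
   field. repeat split; nz. }
 assert (Hper : forall k, (k < K)%nat ->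
   0 < mxv K B p k / p k /\ ln r + rsum K (fun j => pi k j * (ln (rr j) - ln (rr k))) <= ln (mxv K B p k / p k)).
 { intros k Hk. destruct (jensen_ln K (pi k) (fun j => rr j / rr k) (fun j Hj => Hpi0 k j Hk Hj) (Hpi1 k Hk)) as [Hpos Hjen].
   { intros j Hj. apply Rdiv_lt_0_compat; auto. }
   rewrite HA by auto. split. apply Rmult_lt_0_compat; auto.
   rewrite ln_mult by auto.
   rewrite (rsum_ext _ _ (fun j => pi k j * ln (rr j / rr k))); [lra|].
   intros j Hj. rewrite ln_div'; auto. }
 split.
 { intros k Hk. destruct (Hper k Hk) as [H _]. specialize (Hp k Hk).
   replace (mxv K B p k) with (mxv K B p k / p k * p k) by (field; nz). apply Rmult_lt_0_compat; auto. }
 assert (Hsum : rsum K (fun k => y k * x k * (ln r + rsum K (fun j => pi k j * (ln (rr j) - ln (rr k)))))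
               <= rsum K (fun k => y k * x k * ln (mxv K B p k / p k))).
 { apply rsum_le. intros k Hk. apply Rmult_le_compat_l. apply Rmult_le_pos; left; auto. apply Hper; auto. }
 assert (Hzero : rsum K (fun k => y k * x k * rsum K (fun j => pi k j * (ln (rr j) - ln (rr k)))) = 0).
 { assert (E1 : rsum K (fun k => y k * x k * rsum K (fun j => pi k j * (ln (rr j) - ln (rr k)))) =
      rsum K (fun k => rsum K (fun j => / r * (y k * B k j) * (x j * ln (rr j))))
      - rsum K (fun k => rsum K (fun j => / r * (B k j * x j) * (y k * ln (rr k))))).
   { rewrite <- rsum_minus. apply rsum_ext. intros k Hk. rewrite <- rsum_scal, <- rsum_minus. apply rsum_ext.
     intros j Hj. unfold pi. specialize (Hx k Hk). field. split; nz. }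
   rewrite E1. rewrite rsum_swap.
   assert (E2 : forall j, (j < K)%nat -> rsum K (fun k => / r * (y k * B k j) * (x j * ln (rr j))) = y j * x j * ln (rr j)).
   { intros j Hj. rewrite rsum_scal_r, rsum_scal. fold (mxv K (trmx B) y j).
     replace (rsum K (fun i => y i * B i j)) with (mxv K (trmx B) y j) by (unfold mxv, trmx; apply rsum_ext; intros; ring).
     rewrite Ey by auto. field. nz. }
   assert (E3 : forall k, (k < K)%nat -> rsum K (fun j => / r * (B k j * x j) * (y k * ln (rr k))) = y k * x k * ln (rr k)).
   { intros k Hk. rewrite rsum_scal_r, rsum_scal. fold (mxv K B x k). rewrite Ex by auto. field. nz. }
   rewrite (rsum_ext _ _ _ E2), (rsum_ext _ _ _ E3). ring. }
 rewrite (rsum_ext _ _ (fun k => y k * x k * ln r + y k * x k * rsum K (fun j => pi k j * (ln (rr j) - ln (rr k))))) in Hsum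
   by (intros; ring).
 rewrite rsum_plus, Hzero, rsum_scal_r, Hyx in Hsum. lra.
Qed.



Lemma ln_le' a b : 0 < a -> a <= b -> ln a <= ln b.
Proof. intros Ha Hab. destruct Hab. left; apply ln_increasing; auto. subst; lra. Qed.

Lemma rsum_opp n f : rsum n (fun k => - f k) = - rsum n f.
Proof. induction n; simpl; [ring|]. rewrite IHn. ring. Qed.

Lemma psi_lt phi : A2 phi -> forall a b, 0 < a -> a < b -> psi phi a < psi phi b.
Proof. intros [_ Hi] a b Ha Hab. unfold psi. assert (/ b < / a) by (apply Rinv_lt_contravar; nra).
 assert (phi (/ b) < phi (/ a)) by (apply Hi; auto; apply Rinv_0_lt_compat; lra). lra. Qed.

Lemma psi_le_inv phi : A2 phi -> forall a b, 0 < a -> 0 < b -> psi phi a <= psi phi b -> a <= b.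
Proof. intros H2 a b Ha Hb H. destruct (Rle_or_lt a b); auto. assert (psi phi b < psi phi a) by (apply psi_lt; auto). lra. Qed.

Lemma sir_pos P p k : (k < pK P)%nat -> (forall j, (j < pK P)%nat -> 0 <= p j) -> 0 < p k ->
  0 < SIR (pK P) (pV P) (pz P) p k.
Proof. intros Hk Hp Hpk. unfold SIR. apply Rdiv_lt_0_compat; auto. apply den_pos; auto. Qed.

Lemma G_pbar P phi w : rsum (pK P) w = 1 ->
  Gfun (pK P) phi (pV P) (pz P) (pg P) w (pbar P) = psi phi (rhoP P).
Proof. intros Hw. unfold Gfun.
 rewrite (rsum_ext _ _ (fun k => w k * psi phi (rhoP P))). rewrite rsum_scal_r, Hw. ring.
 intros k Hk. f_equal. f_equal. assert (H := sir_pbar P k Hk). assert (Hs := sir_pos P (pbar P) k Hk (pbar_nonneg P) (pbar_pos P k Hk)).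
 assert (Hg := hg P k Hk). unfold rhoP. rewrite <- H. field. split; nz. Qed.

Lemma key_ineq P phi n x y p : A2 phi -> A3 phi -> (n < pN P)%nat ->
  (forall k, (k < pK P)%nat -> 0 < x k) -> (forall k, (k < pK P)%nat -> 0 < y k) ->
  (forall k, (k < pK P)%nat -> mxv (pK P) (Bmat (pV P) (pz P) (pg P) (pC P) (pPh P) n) x k = rhoP P * x k) ->
  (forall k, (k < pK P)%nat -> mxv (pK P) (trmx (Bmat (pV P) (pz P) (pg P) (pC P) (pPh P) n)) y k = rhoP P * y k) ->
  rsum (pK P) (fun k => y k * x k) = 1 ->
  inPplus (pK P) (pN P) (pC P) (pPh P) p ->
  psi phi (rhoP P) <= Gfun (pK P) phi (pV P) (pz P) (pg P) (fun k => y k * x k) p.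
Proof.
 intros H2 H3 Hn Hx Hy Ex Ey Hyx [Hp Hpp].
 assert (Hr := rhoP_pos P). assert (HK := hK P).
 destruct (FK (pK P) (Bmat (pV P) (pz P) (pg P) (pC P) (pPh P) n) x y (rhoP P) p) as [HBp Hfk]; auto.
 { intros; apply B_nonneg; auto. }
 assert (Hp0 : forall j, (j < pK P)%nat -> 0 <= p j) by (apply (proj1 Hp)).
 set (s := fun k => ln (SIR (pK P) (pV P) (pz P) p k / pg P k)).
 assert (Hsp : forall k, (k < pK P)%nat -> 0 < SIR (pK P) (pV P) (pz P) p k / pg P k).
 { intros k Hk. apply Rdiv_lt_0_compat. apply sir_pos; auto. apply hg; auto. }
 assert (Hh : forall k, (k < pK P)%nat ->
   mxv (pK P) (Bmat (pV P) (pz P) (pg P) (pC P) (pPh P) n) p k / p k <= / (SIR (pK P) (pV P) (pz P) p k / pg P k)).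
 { intros k Hk. rewrite mxv_B. assert (Hd := den_pos P p k Hk Hp0). assert (Hpk := Hpp k Hk). assert (Hg := hg P k Hk).
   replace (/ (SIR (pK P) (pV P) (pz P) p k / pg P k)) with (pg P k * (mxv (pK P) (pV P) p k + pz P k) / p k)
     by (unfold SIR; field; repeat split; nz).
   unfold Rdiv. apply Rmult_le_compat_r. left; apply Rinv_0_lt_compat; auto.
   assert (Hc := proj2 Hp n Hn). fold (cn P n p) in Hc. assert (HP := hPh P n Hn). assert (Hz := hz P k Hk).
   assert (/ pPh P n * (pg P k * pz P k * cn P n p) <= pg P k * pz P k).
   { replace (/ pPh P n * (pg P k * pz P k * cn P n p)) with (pg P k * pz P k * (cn P n p / pPh P n)) by (field; nz).
     rewrite <- (Rmult_1_r (pg P k * pz P k)) at 2. apply Rmult_le_compat_l. apply Rmult_le_pos; lra.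
     apply (Rmult_le_reg_r (pPh P n)); auto. replace (cn P n p / pPh P n * pPh P n) with (cn P n p) by (field; nz). lra. }
   lra. }
 assert (Hsum : rsum (pK P) (fun k => y k * x k * s k) <= ln (/ rhoP P)).
 { rewrite ln_Rinv by auto.
   assert (rsum (pK P) (fun k => y k * x k * s k) <= - rsum (pK P) (fun k => y k * x k * ln (mxv (pK P) (Bmat (pV P) (pz P) (pg P) (pC P) (pPh P) n) p k / p k))).
   { rewrite <- rsum_opp. apply rsum_le.
     intros k Hk. unfold s. assert (Hyk := Hy k Hk). assert (Hxk := Hx k Hk).
     assert (ln (mxv (pK P) (Bmat (pV P) (pz P) (pg P) (pC P) (pPh P) n) p k / p k) <= - ln (SIR (pK P) (pV P) (pz P) p k / pg P k)).
     { rewrite <- ln_Rinv by auto. apply ln_le'. apply Rdiv_lt_0_compat; auto. apply Hh; auto. }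
     assert (0 < y k * x k) by (apply Rmult_lt_0_compat; auto). nra. }
   lra. }
 assert (HF := Fconc phi H2 H3 (pK P) (fun k => y k * x k) s ltac:(lia)
   ltac:(intros k Hk; apply Rmult_lt_0_compat; auto) Hyx).
 assert (HF2 : phi (exp (rsum (pK P) (fun k => y k * x k * s k))) <= phi (/ rhoP P)).
 { apply (phi_le phi H2). apply exp_pos. rewrite <- (exp_ln (/ rhoP P)) by (apply Rinv_0_lt_compat; auto).
   destruct Hsum. left; apply exp_increasing; auto. rewrite H; lra. }
 unfold Gfun, psi at 2.
 rewrite (rsum_ext _ _ (fun k => - (y k * x k * phi (exp (s k))))).
 - rewrite rsum_opp. unfold psi. lra.
 - intros k Hk. unfold psi. unfold s. rewrite exp_ln by auto.
   assert (H := Hsp k Hk). assert (Hs := sir_pos P p k Hk Hp0 (Hpp k Hk)). assert (Hg := hg P k Hk).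
   replace (/ (pg P k / SIR (pK P) (pV P) (pz P) p k)) with (SIR (pK P) (pV P) (pz P) p k / pg P k) by (field; split; nz).
   ring.
Qed.



Definition dot K (u v : nat -> R) := rsum K (fun k => u k * v k).

Lemma dot_lin_l K a u b v w : dot K (fun k => a * u k + b * v k) w = a * dot K u w + b * dot K v w.
Proof. unfold dot. rewrite <- !rsum_scal, <- rsum_plus. apply rsum_ext; intros; ring. Qed.

Lemma dot_lin_r K w a u b v : dot K w (fun k => a * u k + b * v k) = a * dot K w u + b * dot K w v.
Proof. unfold dot. rewrite <- !rsum_scal, <- rsum_plus. apply rsum_ext; intros; ring. Qed.

Lemma dot_comm K u v : dot K u v = dot K v u.
Proof. unfold dot. apply rsum_ext; intros; ring. Qed.

Lemma farkas K m : forall (a : nat -> nat -> R) (b : nat -> R),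
  (exists lam : nat -> R, (forall i, (i < m)%nat -> 0 <= lam i) /\
      forall k, (k < K)%nat -> b k = rsum m (fun i => lam i * a i k)) \/
  (exists d, (forall i, (i < m)%nat -> dot K (a i) d <= 0) /\ 0 < dot K b d).
Proof.
 induction m; intros a b.
 - destruct (classic (forall k, (k < K)%nat -> b k = 0)) as [H0|H0].
   + left. exists (fun _ => 0). split. intros; lra. intros k Hk. rewrite H0 by auto. simpl. auto.
   + right. exists b. split. intros; lia. apply not_all_ex_not in H0. destruct H0 as [k Hk].
     apply imply_to_and in Hk. destruct Hk as [Hk Hb]. unfold dot. apply rsum_pos.
     intros j Hj. apply Rle_0_sqr. exists k. split; auto. assert (0 < b k * b k) by (apply Rsqr_pos_lt; auto). auto.
 - destruct (IHm a b) as [[lam [Hl Hb]]|[d [Hd Hbd]]].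
   + left. exists (fun i => if Nat.eq_dec i m then 0 else lam i). split.
     * intros i Hi. destruct (Nat.eq_dec i m); [lra|apply Hl; lia].
     * intros k Hk. rewrite rsum_S. rewrite Hb by auto.
       destruct (Nat.eq_dec m m); [|lia]. rewrite Rmult_0_l, Rplus_0_r. apply rsum_ext.
       intros i Hi. destruct (Nat.eq_dec i m); [lia|auto].
   + destruct (Rle_or_lt (dot K (a m) d) 0) as [Ham|Ham].
     * right. exists d. split; auto. intros i Hi. destruct (Nat.eq_dec i m); [subst; auto|apply Hd; lia].
     * set (al := dot K (a m) d). assert (Hal : 0 < al) by exact Ham.
       set (a' := fun i k => al * a i k - dot K (a i) d * a m k).
       set (b' := fun k => al * b k - dot K b d * a m k).
       destruct (IHm a' b') as [[mu [Hmu Hb']]|[d' [Hd' Hbd']]].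
       -- left. set (lm := (dot K b d - rsum m (fun i => mu i * dot K (a i) d)) / al).
          assert (Hs0 : rsum m (fun i => mu i * dot K (a i) d) <= 0).
          { replace 0 with (rsum m (fun _ => 0)) by (apply rsum_zero; auto). apply rsum_le.
            intros i Hi. assert (H1 := Hmu i Hi). assert (H2 := Hd i Hi).
            assert (0 <= mu i * - dot K (a i) d) by (apply Rmult_le_pos; lra). lra. }
          exists (fun i => if Nat.eq_dec i m then lm else mu i). split.
          ++ intros i Hi. destruct (Nat.eq_dec i m).
             ** unfold lm. unfold Rdiv. apply Rmult_le_pos. lra. left; apply Rinv_0_lt_compat; auto.
             ** apply Hmu; lia.
          ++ intros k Hk. rewrite rsum_S. destruct (Nat.eq_dec m m); [|lia].
             rewrite (rsum_ext _ _ (fun i => mu i * a i k)) by (intros i Hi; destruct (Nat.eq_dec i m); [lia|auto]).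
             specialize (Hb' k Hk). unfold b', a' in Hb'.
             rewrite (rsum_ext _ _ (fun i => al * (mu i * a i k) - mu i * dot K (a i) d * a m k)) in Hb' by (intros; ring).
             rewrite rsum_minus, rsum_scal, rsum_scal_r in Hb'.
             unfold lm. apply (Rmult_eq_reg_l al). 2: nz.
             replace (al * (rsum m (fun i => mu i * a i k) + (dot K b d - rsum m (fun i => mu i * dot K (a i) d)) / al * a m k))
               with (al * rsum m (fun i => mu i * a i k) + (dot K b d - rsum m (fun i => mu i * dot K (a i) d)) * a m k) by (field; nz).
             lra.
       -- right. set (c := dot K (a m) d' / al).
          exists (fun k => 1 * d' k + (- c) * d k). split.
          ++ intros i Hi. rewrite dot_lin_r. destruct (Nat.eq_dec i m) as [->|Hne].
             ** fold al. unfold c. replace (1 * dot K (a m) d' + - (dot K (a m) d' / al) * al) with 0 by (field; nz). lra.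
             ** assert (Hi' : (i < m)%nat) by lia. specialize (Hd' i Hi').
                replace (a' i) with (fun k => al * a i k + (- dot K (a i) d) * a m k) in Hd'
                  by (apply functional_extensionality; intros; unfold a'; ring).
                rewrite dot_lin_l in Hd'. unfold c.
                replace (1 * dot K (a i) d' + - (dot K (a m) d' / al) * dot K (a i) d)
                  with ((al * dot K (a i) d' + - dot K (a i) d * dot K (a m) d') / al) by (field; nz).
                unfold Rdiv. assert (0 < / al) by (apply Rinv_0_lt_compat; auto).
                assert (0 <= - (al * dot K (a i) d' + - dot K (a i) d * dot K (a m) d') * / al) by (apply Rmult_le_pos; lra).
                lra.
          ++ rewrite dot_lin_r.
             replace b' with (fun k => al * b k + (- dot K b d) * a m k) in Hbd'
               by (apply functional_extensionality; intros; unfold b'; ring).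
             rewrite dot_lin_l in Hbd'. unfold c.
             replace (1 * dot K b d' + - (dot K (a m) d' / al) * dot K b d)
               with ((al * dot K b d' + - dot K b d * dot K (a m) d') / al) by (field; nz).
             apply Rdiv_lt_0_compat; auto.
Qed.



Lemma conc K (t : nat -> R) j eps : (j < K)%nat -> 0 < eps ->
  exists w, inPiplus K w /\ t j - eps < rsum K (fun k => w k * t k).
Proof.
 intros Hj He. assert (HK : 0 < INR K) by (apply lt_0_INR; lia).
 set (A := rsum K t / INR K - t j).
 set (del := Rmin (1/2) (eps / (2 * (Rabs A + 1)))).
 assert (Hd1 : del <= 1/2) by apply Rmin_l.
 assert (Hd2 : del <= eps / (2 * (Rabs A + 1))) by apply Rmin_r.
 assert (HA : 0 <= Rabs A) by apply Rabs_pos.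
 assert (Hd0 : 0 < del) by (apply Rmin_glb_lt; [lra|apply Rdiv_lt_0_compat; lra]).
 exists (fun k => del / INR K + (if Nat.eq_dec k j then 1 - del else 0)). split; [split|].
 - intros k Hk. destruct (Nat.eq_dec k j); assert (0 < del / INR K) by (apply Rdiv_lt_0_compat; auto); lra.
 - rewrite rsum_plus, rsum_const, rsum_single by auto. field. nz.
 - rewrite (rsum_ext _ _ (fun k => del / INR K * t k + (if Nat.eq_dec k j then (1 - del) * t k else 0))).
   2: { intros k Hk. destruct (Nat.eq_dec k j); ring. }
   rewrite rsum_plus, rsum_scal, rsum_single_f by auto.
   replace (del / INR K * rsum K t + (1 - del) * t j) with (t j + del * A) by (unfold A; field; nz).
   assert (del * Rabs A < eps).
   { apply Rle_lt_trans with (eps / (2 * (Rabs A + 1)) * Rabs A). apply Rmult_le_compat_r; auto.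
     apply (Rmult_lt_reg_r (2 * (Rabs A + 1))). lra.
     replace (eps / (2 * (Rabs A + 1)) * Rabs A * (2 * (Rabs A + 1))) with (eps * Rabs A) by (field; nz). nra. }
   assert (- Rabs A <= A) by (unfold Rabs; destruct (Rcase_abs A); lra).
   nra.
Qed.

Lemma SIR_ext K V z p q k : (k < K)%nat -> (forall j, (j < K)%nat -> p j = q j) ->
  SIR K V z p k = SIR K V z q k.
Proof. intros Hk H. unfold SIR. rewrite (mxv_ext K V p q) by auto. rewrite H by auto. auto. Qed.

Lemma Gfun_ext K phi V z g w p q : (forall j, (j < K)%nat -> p j = q j) ->
  Gfun K phi V z g w p = Gfun K phi V z g w q.
Proof. intros H. unfold Gfun. apply rsum_ext. intros k Hk. rewrite (SIR_ext K V z p q k Hk H). auto. Qed.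

Lemma inP_ext K N C Ph p q : (forall j, (j < K)%nat -> p j = q j) -> inP K N C Ph p -> inP K N C Ph q.
Proof. intros H [H1 H2]. split. intros k Hk. rewrite <- H; auto.
 intros n Hn. rewrite (rsum_ext _ _ (fun j => C n j * p j)). auto. intros j Hj. rewrite H; auto. Qed.

Lemma inPplus_ext K N C Ph p q : (forall j, (j < K)%nat -> p j = q j) -> inPplus K N C Ph p -> inPplus K N C Ph q.
Proof. intros H [H1 H2]. split. eapply inP_ext; eauto. intros k Hk. rewrite <- H; auto. Qed.

Lemma der_ext f g x l l' : (forall s, f s = g s) -> l = l' -> derivable_pt_lim f x l -> derivable_pt_lim g x l'.
Proof. intros H <- Hd. replace g with f; auto. apply functional_extensionality; auto. Qed.

Lemma der_affine a b x : derivable_pt_lim (fun s => a + s * b) x b.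
Proof. apply (der_ext (fct_cte a + mult_real_fct b id)%F _ x (0 + b * 1)).
 intros s. unfold plus_fct, fct_cte, mult_real_fct, id. ring. ring.
 apply derivable_pt_lim_plus. apply derivable_pt_lim_const. apply derivable_pt_lim_scal. apply derivable_pt_lim_id. Qed.

Lemma der_rsum n (F : nat -> R -> R) (F' : nat -> R) x :
  (forall k, (k < n)%nat -> derivable_pt_lim (F k) x (F' k)) ->
  derivable_pt_lim (fun s => rsum n (fun k => F k s)) x (rsum n F').
Proof. induction n; intros H.
 - simpl. apply (der_ext (fct_cte 0) _ x 0). intros; auto. auto. apply derivable_pt_lim_const.
 - simpl. apply (der_ext ((fun s => rsum n (fun k => F k s)) + F n)%F _ x (rsum n F' + F' n)).
   intros s. unfold plus_fct. auto. auto.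
   apply derivable_pt_lim_plus. apply IHn. intros; apply H; lia. apply H; lia. Qed.

Lemma neg_der_decrease g D : derivable_pt_lim g 0 D -> D < 0 ->
  exists del, 0 < del /\ forall h, 0 < h < del -> g h < g 0.
Proof. intros Hd HD. destruct (Hd (- D / 2) ltac:(lra)) as [del Hdel].
 exists del. split. apply cond_pos. intros h [Hh1 Hh2].
 specialize (Hdel h ltac:(nz) ltac:(rewrite Rabs_right; lra)).
 apply Rabs_def2 in Hdel. destruct Hdel as [H1 _]. rewrite Rplus_0_l in H1.
 assert ((g h - g 0) / h < 0) by lra.
 assert (g h - g 0 < 0).
 { replace (g h - g 0) with ((g h - g 0) / h * h) by (field; nz). assert (0 < h) by lra. nra. }
 lra. Qed.

Lemma feas P d : (forall n, (n < pN P)%nat -> cn P n (pbar P) = pPh P n -> cn P n d <= 0) ->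
  exists e, 0 < e /\ forall s, 0 < s <= e -> inPplus (pK P) (pN P) (pC P) (pPh P) (fun j => pbar P j + s * d j).
Proof. intros Hd.
 destruct (fin_small (pK P) (fun k s => 0 < pbar P k + s * d k)) as [e1 [He1 H1]].
 { intros k Hk. assert (Hp := pbar_pos P k Hk). assert (HA := Rabs_pos (d k)).
   exists (pbar P k / (Rabs (d k) + 1)). split. apply Rdiv_lt_0_compat; lra.
   intros s [Hs1 Hs2]. assert (s * Rabs (d k) < pbar P k).
   { apply Rle_lt_trans with (pbar P k / (Rabs (d k) + 1) * Rabs (d k)). apply Rmult_le_compat_r; auto.
     apply (Rmult_lt_reg_r (Rabs (d k) + 1)). lra.
     replace (pbar P k / (Rabs (d k) + 1) * Rabs (d k) * (Rabs (d k) + 1)) with (pbar P k * Rabs (d k)) by (field; nz). nra. }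
   assert (- Rabs (d k) <= d k) by (unfold Rabs; destruct (Rcase_abs (d k)); lra). nra. }
 destruct (fin_small (pN P) (fun n s => cn P n (fun j => pbar P j + s * d j) <= pPh P n)) as [e2 [He2 H2]].
 { intros n Hn.
   assert (E : forall s, cn P n (fun j => pbar P j + s * d j) = cn P n (pbar P) + s * cn P n d).
   { intros s. unfold cn. rewrite <- rsum_scal, <- rsum_plus. apply rsum_ext; intros; ring. }
   assert (Hle := proj2 (hP P) n Hn). fold (cn P n (pbar P)) in Hle.
   destruct (Req_dec (cn P n (pbar P)) (pPh P n)) as [Et|Et].
   - exists 1. split. lra. intros s Hs. rewrite E. specialize (Hd n Hn Et). nra.
   - assert (HA := Rabs_pos (cn P n d)).
     exists ((pPh P n - cn P n (pbar P)) / (Rabs (cn P n d) + 1)). split. apply Rdiv_lt_0_compat; lra.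
     intros s [Hs1 Hs2]. rewrite E.
     assert (s * Rabs (cn P n d) < pPh P n - cn P n (pbar P)).
     { apply Rle_lt_trans with ((pPh P n - cn P n (pbar P)) / (Rabs (cn P n d) + 1) * Rabs (cn P n d)). apply Rmult_le_compat_r; auto.
       apply (Rmult_lt_reg_r (Rabs (cn P n d) + 1)). lra.
       replace ((pPh P n - cn P n (pbar P)) / (Rabs (cn P n d) + 1) * Rabs (cn P n d) * (Rabs (cn P n d) + 1))
         with ((pPh P n - cn P n (pbar P)) * Rabs (cn P n d)) by (field; nz). nra. }
     assert (cn P n d <= Rabs (cn P n d)) by apply RRle_abs. nra. }
 exists (Rmin e1 e2). split. apply Rmin_glb_lt; auto.
 intros s Hs. assert (Rmin e1 e2 <= e1) by apply Rmin_l. assert (Rmin e1 e2 <= e2) by apply Rmin_r.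
 split; [split|].
 - intros k Hk. left. apply H1; auto; lra.
 - intros n Hn. apply (H2 n Hn s). lra.
 - intros k Hk. apply H1; auto; lra.
Qed.

Lemma dir P phi ws d : A2 phi -> A3 phi ->
  (forall p, inPplus (pK P) (pN P) (pC P) (pPh P) p ->
     Gfun (pK P) phi (pV P) (pz P) (pg P) ws (pbar P) <= Gfun (pK P) phi (pV P) (pz P) (pg P) ws p) ->
  (forall n, (n < pN P)%nat -> cn P n (pbar P) = pPh P n -> cn P n d <= 0) ->
  dot (pK P) (fun j => rhoP P * (ws j / pbar P j) - VTg P (fun i => ws i / pbar P i) j) d <= 0.
Proof.
 intros H2 H3 Hmin Hd. destruct (proj1 H2) as [dphi [Hdphi _]].
 apply Rnot_lt_le. intro Hpos.
 assert (Hc := cs_pos P). assert (Hr := rhoP_pos P).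
 set (Dk := fun k => pg P k * (mxv (pK P) (pV P) (pbar P) k + pz P k)).
 assert (HDk : forall k, (k < pK P)%nat -> Dk k = rhoP P * pbar P k).
 { intros k Hk. unfold Dk, rhoP. rewrite (pbar_exact P k Hk). field. nz. }
 set (q := fun k s => (pbar P k + s * d k) / (pg P k * (mxv (pK P) (pV P) (pbar P) k + s * mxv (pK P) (pV P) d k + pz P k))).
 set (ql := fun k => (d k * Dk k - pg P k * mxv (pK P) (pV P) d k * pbar P k) / (Dk k)²).
 assert (Hq0 : forall k, (k < pK P)%nat -> q k 0 = cs P).
 { intros k Hk. unfold q. rewrite (pbar_exact P k Hk) at 1. assert (Hd0 := den_pos P (pbar P) k Hk (pbar_nonneg P)).
   assert (Hg := hg P k Hk). field. split; nz. }
 assert (Hql : forall k, (k < pK P)%nat -> derivable_pt_lim (q k) 0 (ql k)).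
 { intros k Hk. assert (Hf20 : pg P k * (mxv (pK P) (pV P) (pbar P) k + 0 * mxv (pK P) (pV P) d k + pz P k) = Dk k) by (unfold Dk; ring).
   assert (HDp : 0 < Dk k) by (rewrite HDk by auto; apply Rmult_lt_0_compat; auto; apply pbar_pos; auto).
   apply (der_ext (div_fct (fun s => pbar P k + s * d k) (fun s => Dk k + s * (pg P k * mxv (pK P) (pV P) d k))) _ 0
     ((d k * (Dk k + 0 * (pg P k * mxv (pK P) (pV P) d k)) - pg P k * mxv (pK P) (pV P) d k * (pbar P k + 0 * d k)) / (Dk k + 0 * (pg P k * mxv (pK P) (pV P) d k))²)).
   - intros s. unfold div_fct, q, Dk. f_equal. ring.
   - unfold ql. f_equal; [f_equal; ring|f_equal; ring].
   - apply (derivable_pt_lim_div (fun s => pbar P k + s * d k) (fun s => Dk k + s * (pg P k * mxv (pK P) (pV P) d k)) 0 (d k) (pg P k * mxv (pK P) (pV P) d k)).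
     apply der_affine. apply der_affine. nra. }
 set (g := fun s => rsum (pK P) (fun k => ws k * - phi (q k s))).
 set (D := rsum (pK P) (fun k => ws k * - (dphi (cs P) * ql k))).
 assert (Hg : derivable_pt_lim g 0 D).
 { apply (der_rsum (pK P) (fun k s => ws k * - phi (q k s)) (fun k => ws k * - (dphi (cs P) * ql k))).
   intros k Hk. apply (der_ext (mult_real_fct (ws k) (opp_fct (comp phi (q k)))) _ 0 (ws k * - (dphi (q k 0) * ql k))).
   - intros s. unfold mult_real_fct, opp_fct, comp. auto.
   - rewrite Hq0; auto.
   - apply derivable_pt_lim_scal. apply derivable_pt_lim_opp. apply derivable_pt_lim_comp. auto.
     apply Hdphi. rewrite Hq0; auto. }
 assert (HD : D = - (dphi (cs P) * / (rhoP P * rhoP P)) * dot (pK P) (fun j => rhoP P * (ws j / pbar P j) - VTg P (fun i => ws i / pbar P i) j) d).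
 { unfold D, dot.
   rewrite (rsum_ext _ _ (fun k => - (dphi (cs P) * / (rhoP P * rhoP P)) * (rhoP P * (ws k / pbar P k) * d k - ws k / pbar P k * pg P k * mxv (pK P) (pV P) d k))).
   2: { intros k Hk. unfold ql. rewrite HDk by auto. assert (Hp := pbar_pos P k Hk). unfold Rsqr. field. split; nz. }
   rewrite rsum_scal. f_equal.
   rewrite (rsum_ext _ (fun k => (rhoP P * (ws k / pbar P k) - VTg P (fun i => ws i / pbar P i) k) * d k)
     (fun k => rhoP P * (ws k / pbar P k) * d k - VTg P (fun i => ws i / pbar P i) k * d k)) by (intros; ring).
   rewrite !rsum_minus. f_equal. unfold VTg, mxv.
   rewrite (rsum_ext _ (fun k => ws k / pbar P k * pg P k * rsum (pK P) (fun j => pV P k j * d j))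
     (fun k => rsum (pK P) (fun j => pV P k j * pg P k * (ws k / pbar P k) * d j))) by (intros; rewrite <- rsum_scal; apply rsum_ext; intros; ring).
   rewrite rsum_swap. apply rsum_ext. intros j Hj. rewrite <- rsum_scal_r. apply rsum_ext. intros; ring. }
 assert (Hdp := dphi_pos phi dphi Hdphi H2 H3 (cs P) Hc).
 assert (HDn : D < 0).
 { rewrite HD. assert (0 < dphi (cs P) * / (rhoP P * rhoP P)) by (apply Rmult_lt_0_compat; auto; apply Rinv_0_lt_compat; nra). nra. }
 destruct (neg_der_decrease g D Hg HDn) as [del [Hdel Hdec]].
 destruct (feas P d Hd) as [e [He Hfe]].
 set (s := Rmin (del / 2) e).
 assert (Hs1 : s <= del / 2) by apply Rmin_l. assert (Hs2 : s <= e) by apply Rmin_r.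
 assert (Hs0 : 0 < s) by (apply Rmin_glb_lt; lra).
 assert (HGg : forall t, (forall k, (k < pK P)%nat -> 0 < pbar P k + t * d k) ->
   Gfun (pK P) phi (pV P) (pz P) (pg P) ws (fun j => pbar P j + t * d j) = g t).
 { intros t Ht. unfold Gfun, g. apply rsum_ext. intros k Hk. f_equal. unfold psi. f_equal. f_equal.
   unfold SIR. rewrite mxv_plus, mxv_scal. unfold q.
   assert (Hd0 := den_pos P (fun j => pbar P j + t * d j) k Hk ltac:(intros j Hj; left; apply Ht; auto)).
   rewrite mxv_plus, mxv_scal in Hd0. assert (Hg0 := hg P k Hk). assert (Ht0 := Ht k Hk).
   field. repeat split; nz. }
 assert (Hfs := Hfe s ltac:(lra)).
 assert (E1 := HGg s (proj2 Hfs)).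
 assert (E0 : Gfun (pK P) phi (pV P) (pz P) (pg P) ws (pbar P) = g 0).
 { rewrite <- HGg. apply Gfun_ext. intros; ring. intros k Hk. rewrite Rmult_0_l, Rplus_0_r. apply pbar_pos; auto. }
 assert (H1 := Hmin _ Hfs). assert (H4 := Hdec s ltac:(lra)). lra.
Qed.



Lemma G_lin K N phi V z g (c : nat -> R) (w : nat -> nat -> R) p :
  Gfun K phi V z g (fun k => rsum N (fun n => c n * w n k)) p = rsum N (fun n => c n * Gfun K phi V z g (w n) p).
Proof. unfold Gfun. rewrite (rsum_ext _ _ (fun k => rsum N (fun n => c n * w n k * psi phi (g k / SIR K V z p k)))).
 rewrite rsum_swap. apply rsum_ext. intros n Hn. rewrite <- rsum_scal. apply rsum_ext; intros; ring.
 intros k Hk. rewrite <- rsum_scal_r. auto. Qed.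

Lemma VTg_rsum P N (c : nat -> R) (Y : nat -> nat -> R) k :
  VTg P (fun j => rsum N (fun n => c n * Y n j)) k = rsum N (fun n => c n * VTg P (Y n) k).
Proof. unfold VTg. rewrite (rsum_ext _ _ (fun j => rsum N (fun n => pV P j k * pg P j * (c n * Y n j)))) by (intros; rewrite rsum_scal; auto).
 rewrite rsum_swap. apply rsum_ext. intros n Hn. rewrite <- rsum_scal. apply rsum_ext; intros; ring. Qed.

Lemma inN0_iff P n : inN0 (pK P) (pN P) (pC P) (pPh P) (pbar P) n <-> ((n < pN P)%nat /\ cn P n (pbar P) = pPh P n).
Proof. unfold inN0, gfun. split.
 - intros [Hn [E _]]. split; auto. assert (Hp := hPh P n Hn). unfold cn.
   apply (Rmult_eq_reg_r (/ pPh P n)). unfold Rdiv in E. rewrite E. field. nz. apply Rinv_neq_0_compat. nz.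
 - intros [Hn E]. split; auto. split. unfold cn in E. rewrite E. field. assert (Hp := hPh P n Hn). nz.
   intros m Hm. assert (Hp := hPh P m Hm). assert (H := proj2 (hP P) m Hm).
   apply (Rmult_le_reg_r (pPh P m)); auto. unfold Rdiv. rewrite Rmult_assoc, Rinv_l by nz. lra. Qed.

Lemma Gfun_ext_w K phi V z g w w' p : (forall k, (k < K)%nat -> w k = w' k) ->
  Gfun K phi V z g w p = Gfun K phi V z g w' p.
Proof. intros H. unfold Gfun. apply rsum_ext. intros k Hk. rewrite H; auto. Qed.



Theorem theorem5
  (K N : nat) (HK : (2 <= K)%nat)
  (C : nat -> nat -> R)
  (HC01 : forall n k, (n < N)%nat -> (k < K)%nat -> C n k = 0 \/ C n k = 1)
  (HCcol : forall k, (k < K)%nat -> exists n, (n < N)%nat /\ C n k = 1)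
  (Ph : nat -> R) (HPh : forall n, (n < N)%nat -> 0 < Ph n)
  (V : nat -> nat -> R)
  (HVnn : forall i j, (i < K)%nat -> (j < K)%nat -> 0 <= V i j)
  (HVdiag : forall k, (k < K)%nat -> V k k = 0)
  (HVirr : irreducible K V)
  (z : nat -> R) (Hz : forall k, (k < K)%nat -> 0 < z k)
  (gam : nat -> R) (Hgam : forall k, (k < K)%nat -> 0 < gam k)
  (phi : R -> R) (HA2 : A2 phi) (HA3 : A3 phi)
  (rho : nat -> R)
  (Hrho : forall n, (n < N)%nat -> is_spectral_radius K (Bmat V z gam C Ph n) (rho n))
  (pbar : nat -> R)
  (Hpbar : inP K N C Ph pbar /\
           forall q, inP K N C Ph q ->
             rmin K (fun k => SIR K V z q k / gam k)
               <= rmin K (fun k => SIR K V z pbar k / gam k))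
  (n0 : nat) (Hn0 : (n0 < N)%nat)
  (Hn0max : forall n, (n < N)%nat -> rho n <= rho n0) :
  sup_inf_eq (inPiplus K) (inPplus K N C Ph) (Gfun K phi V z gam) (psi phi (rho n0)) /\
  inf_sup_eq (inPiplus K) (inPplus K N C Ph) (Gfun K phi V z gam) (psi phi (rho n0)) /\
  (forall ws ps : nat -> R,
     saddle_point K N C Ph (Gfun K phi V z gam) ws ps <->
     ((forall k, (k < K)%nat -> ps k = pbar k) /\
      exists (c : nat -> R) (x y : nat -> nat -> R),
        (forall n, (n < N)%nat -> 0 <= c n) /\
        (forall n, (n < N)%nat -> ~ inN0 K N C Ph pbar n -> c n = 0) /\
        rsum N c = 1 /\
        (forall n, inN0 K N C Ph pbar n ->
           (forall k, (k < K)%nat -> 0 < x n k) /\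
           (forall k, (k < K)%nat -> 0 < y n k) /\
           (forall k, (k < K)%nat -> mxv K (Bmat V z gam C Ph n) (x n) k = rho n * x n k) /\
           (forall k, (k < K)%nat ->
              mxv K (trmx (Bmat V z gam C Ph n)) (y n) k = rho n * y n k) /\
           rsum K (fun k => y n k * x n k) = 1) /\
        (forall k, (k < K)%nat ->
           ws k = rsum N (fun n => c n * (y n k * x n k))))).
Proof.
 pose (P := Build_Prob K N C Ph V z gam pbar HK HC01 HPh HVnn HVirr Hz Hgam (proj1 Hpbar) (proj2 Hpbar)).
 assert (HA := cs_pos P). assert (Hr := rhoP_pos P).
 assert (Htight : forall n, inN0 K N C Ph pbar n <-> ((n < N)%nat /\ cn P n pbar = Ph n)) by (exact (inN0_iff P)).
 assert (Hrho_t : forall n, inN0 K N C Ph pbar n -> rho n = rhoP P).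
 { intros n Hn. apply Htight in Hn. destruct Hn as [Hn E]. exact (rho_tight P n (rho n) Hn E (Hrho n Hn)). }
 assert (Hrn0 : rho n0 = rhoP P).
 { destruct (tight_exists P) as [n1 [Hn1 E1]].
   assert (E := rho_tight P n1 (rho n1) Hn1 E1 (Hrho n1 Hn1)).
   assert (H1 := rho_le P n0 (rho n0) Hn0 (Hrho n0 Hn0)). assert (H2 := Hn0max n1 Hn1). simpl in *. lra. }
 rewrite Hrn0.
 assert (GP : forall w, rsum K w = 1 -> Gfun K phi V z gam w pbar = psi phi (rhoP P)) by (exact (G_pbar P phi)).
 assert (Hpb : inPplus K N C Ph pbar) by (split; [exact (hP P)|exact (pbar_pos P)]).
 assert (Hkey : forall n (x y : nat -> R) p, inN0 K N C Ph pbar n ->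
   (forall k, (k < K)%nat -> 0 < x k) -> (forall k, (k < K)%nat -> 0 < y k) ->
   (forall k, (k < K)%nat -> mxv K (Bmat V z gam C Ph n) x k = rho n * x k) ->
   (forall k, (k < K)%nat -> mxv K (trmx (Bmat V z gam C Ph n)) y k = rho n * y k) ->
   rsum K (fun k => y k * x k) = 1 -> inPplus K N C Ph p ->
   psi phi (rhoP P) <= Gfun K phi V z gam (fun k => y k * x k) p).
 { intros n x y p Hn Hx Hy Ex Ey Hyx Hp. rewrite (Hrho_t n Hn) in Ex, Ey.
   apply Htight in Hn. exact (key_ineq P phi n x y p HA2 HA3 (proj1 Hn) Hx Hy Ex Ey Hyx Hp). }
 assert (Heig : forall n, inN0 K N C Ph pbar n ->
  (forall k, (k < K)%nat -> 0 < Xf P n k) /\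
  (forall k, (k < K)%nat -> 0 < Yf P n k) /\
  (forall k, (k < K)%nat -> mxv K (Bmat V z gam C Ph n) (Xf P n) k = rho n * Xf P n k) /\
  (forall k, (k < K)%nat -> mxv K (trmx (Bmat V z gam C Ph n)) (Yf P n) k = rho n * Yf P n k) /\
  rsum K (fun k => Yf P n k * Xf P n k) = 1).
 { intros n Hn. rewrite (Hrho_t n Hn). apply Htight in Hn. exact (eig_tight P n (proj1 Hn) (proj2 Hn)). }
 split; [|split].
 -
   split.
   + intros w Hw eps He. exists pbar. split; auto. rewrite GP by (apply Hw). lra.
   + intros eps He. destruct (tight_exists P) as [n1 [Hn1 E1]].
     assert (Hn1' : inN0 K N C Ph pbar n1) by (apply Htight; auto).
     destruct (Heig n1 Hn1') as [Hx [Hy [Ex [Ey Hyx]]]].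
     exists (fun k => Yf P n1 k * Xf P n1 k). split.
     * split; auto. intros k Hk. apply Rmult_lt_0_compat; auto.
     * intros p Hp. assert (H := Hkey n1 _ _ p Hn1' Hx Hy Ex Ey Hyx Hp). lra.
 -
   split.
   + intros p Hp eps He.
     assert (HK1 : (1 <= K)%nat) by lia.
     destruct (rmin_attained K (fun k => SIR K V z p k / gam k) HK1) as [k [Hk Hrk]].
     assert (Hle : SIR K V z p k / gam k <= cs P).
     { simpl in Hrk. rewrite <- Hrk. exact (hmax P p (proj1 Hp)). }
     assert (Hs : 0 < SIR K V z p k) by exact (sir_pos P p k Hk (proj1 (proj1 Hp)) (proj2 Hp k Hk)).
     assert (Hg := Hgam k Hk).
     assert (Hge : rhoP P <= gam k / SIR K V z p k).
     { unfold rhoP. replace (gam k / SIR K V z p k) with (/ (SIR K V z p k / gam k)) by (field; split; nz).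
       apply Rinv_le_contravar; auto. apply Rdiv_lt_0_compat; auto. }
     assert (Hps : psi phi (rhoP P) <= psi phi (gam k / SIR K V z p k)).
     { destruct Hge as [Hlt|Heq]. left; apply psi_lt; auto. rewrite Heq; lra. }
     destruct (conc K (fun k => psi phi (gam k / SIR K V z p k)) k eps Hk He) as [w [Hw Hwt]].
     exists w. split; auto. unfold Gfun. simpl in Hwt. lra.
   + intros eps He. exists pbar. split; auto. intros w Hw. rewrite GP by apply Hw. lra.
 -
   intros ws ps. split.
   + intros [Hws [Hps [Hmw Hmp]]].
     assert (HG1 : Gfun K phi V z gam ws ps <= psi phi (rhoP P)).
     { rewrite <- (GP ws (proj2 Hws)). apply Hmp; auto. }
     assert (Hsir : forall j, (j < K)%nat -> cs P <= SIR K V z ps j / gam j).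
     { intros j Hj. destruct (Rle_or_lt (cs P) (SIR K V z ps j / gam j)) as [H|H]; auto. exfalso.
       assert (Hs : 0 < SIR K V z ps j) by exact (sir_pos P ps j Hj (proj1 (proj1 Hps)) (proj2 Hps j Hj)).
       assert (Hg := Hgam j Hj).
       assert (Hgt : rhoP P < gam j / SIR K V z ps j).
       { unfold rhoP. replace (gam j / SIR K V z ps j) with (/ (SIR K V z ps j / gam j)) by (field; split; nz).
         apply Rinv_lt_contravar; auto. apply Rmult_lt_0_compat; auto. apply Rdiv_lt_0_compat; auto. }
       assert (Hpl := psi_lt phi HA2 _ _ Hr Hgt).
       destruct (conc K (fun k => psi phi (gam k / SIR K V z ps k)) j (psi phi (gam j / SIR K V z ps j) - psi phi (rhoP P)) Hj ltac:(lra)) as [w [Hw Hwt]].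
       assert (H1 := Hmw w Hw). unfold Gfun in H1, HG1. simpl in Hwt. lra. }
     assert (Hpe : forall k, (k < K)%nat -> ps k = pbar k) by exact (pbar_unique P ps (proj1 Hps) Hsir).
     split; auto.
     assert (Hmin' : forall p, inPplus K N C Ph p -> Gfun K phi V z gam ws pbar <= Gfun K phi V z gam ws p).
     { intros p Hp. rewrite <- (Gfun_ext K phi V z gam ws ps pbar Hpe). apply Hmp; auto. }
     set (tight := fun n => ((n < N)%nat /\ cn P n pbar = Ph n)).
     set (a := fun n k => if excluded_middle_informative (tight n) then C n k else 0).
     set (u := fun i => ws i / pbar i).
     set (r := fun j => rhoP P * (ws j / pbar j) - VTg P (fun i => ws i / pbar i) j).
     destruct (farkas K N a r) as [[lam [Hl Hrl]]|[d [Hd Hrd]]].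
     2: { exfalso. assert (Hdir := dir P phi ws d HA2 HA3 Hmin').
          assert (dot K r d <= 0).
          { apply Hdir. intros n Hn E. specialize (Hd n Hn). unfold a in Hd.
            destruct (excluded_middle_informative (tight n)) as [Ht|Ht]. exact Hd. exfalso; apply Ht; split; auto. }
          lra. }
     set (beta := fun n => if excluded_middle_informative (tight n) then lam n else 0).
     assert (Hrb : forall k, (k < K)%nat -> r k = rsum N (fun n => beta n * C n k)).
     { intros k Hk. rewrite Hrl by auto. apply rsum_ext. intros n Hn. unfold a, beta.
       destruct (excluded_middle_informative (tight n)); ring. }
     assert (Hu : forall k, (k < K)%nat -> u k = rsum N (fun n => beta n * Yf P n k)).
     { assert (Hz0 : forall k, (k < pK P)%nat -> (fun k => u k - rsum N (fun n => beta n * Yf P n k)) k = 0).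
       { apply inj_left. intros k Hk.
         replace (fun k => u k - rsum N (fun n => beta n * Yf P n k)) with (fun k => 1 * u k + (-1) * rsum N (fun n => beta n * Yf P n k))
           by (apply functional_extensionality; intros; ring).
         rewrite VTg_lin, VTg_rsum.
         assert (E := Hrb k Hk). unfold r in E. replace (ws k / pbar k) with (u k) in E by reflexivity.
         replace (fun i => ws i / pbar i) with u in E by auto.
         assert (E2 : rsum N (fun n => beta n * C n k) = rsum N (fun n => beta n * (rhoP P * Yf P n k - VTg P (Yf P n) k))).
         { apply rsum_ext. intros n Hn. rewrite (Yf_spec P n k Hk). auto. }
         rewrite (rsum_ext _ (fun n => beta n * (rhoP P * Yf P n k - VTg P (Yf P n) k)) (fun n => rhoP P * (beta n * Yf P n k) - beta n * VTg P (Yf P n) k)) in E2 by (intros; ring).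
         rewrite rsum_minus, rsum_scal in E2. simpl in *. lra. }
       intros k Hk. specialize (Hz0 k Hk). simpl in Hz0. lra. }
     assert (Hsg : forall n, tight n -> 0 < sgm P n) by (intros n [Hn E]; exact (sgm_pos P n Hn E)).
     set (c := fun n => beta n * sgm P n).
     assert (Hwsk : forall k, (k < K)%nat -> ws k = rsum N (fun n => c n * (Yf P n k * Xf P n k))).
     { intros k Hk. assert (Hp := pbar_pos P k Hk). simpl in Hp.
       replace (ws k) with (pbar k * u k) by (unfold u; field; nz). rewrite Hu by auto.
       rewrite <- rsum_scal. apply rsum_ext. intros n Hn. unfold c, beta. change (Xf P n k) with (pbar k / sgm P n).
       destruct (excluded_middle_informative (tight n)) as [Ht|Ht]; [|ring].
       assert (H := Hsg n Ht). field. nz. }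
     exists c, (Xf P), (Yf P). split; [|split; [|split; [|split]]].
     * intros n Hn. unfold c, beta. destruct (excluded_middle_informative (tight n)) as [Ht|Ht]; [|lra].
       apply Rmult_le_pos. apply Hl; auto. left; apply Hsg; auto.
     * intros n Hn Hni. unfold c, beta. destruct (excluded_middle_informative (tight n)) as [Ht|Ht]; [|ring].
       exfalso. apply Hni. apply Htight. exact Ht.
     * destruct Hws as [_ Hws1]. rewrite (rsum_ext _ _ _ Hwsk) in Hws1. rewrite rsum_swap in Hws1.
       rewrite <- Hws1. apply rsum_ext. intros n Hn. rewrite rsum_scal.
       unfold c, beta. destruct (excluded_middle_informative (tight n)) as [Ht|Ht]; [|ring].
       assert (Hn' : inN0 K N C Ph pbar n) by (apply Htight; exact Ht).
       destruct (Heig n Hn') as [_ [_ [_ [_ E]]]]. rewrite E. ring.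
     * exact Heig.
     * exact Hwsk.
   + intros [Hpe [c [x [y [Hc0 [Hcz [Hc1 [Hxy Hws]]]]]]]].
     assert (Hterm : forall n k, (n < N)%nat -> (k < K)%nat -> 0 <= c n * (y n k * x n k)).
     { intros n k Hn Hk. destruct (classic (inN0 K N C Ph pbar n)) as [Hi|Hi].
       - destruct (Hxy n Hi) as [Hx [Hy _]]. apply Rmult_le_pos; auto. apply Rmult_le_pos; left; auto.
       - rewrite Hcz by auto. lra. }
     assert (Hcsum : forall (f : nat -> R), (forall n, inN0 K N C Ph pbar n -> f n = 1) ->
        rsum N (fun n => c n * f n) = 1).
     { intros f Hf. rewrite <- Hc1. apply rsum_ext. intros n Hn. destruct (classic (inN0 K N C Ph pbar n)) as [Hi|Hi].
       rewrite Hf; auto; ring. rewrite Hcz; auto; ring. }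
     assert (Hwsum : rsum K ws = 1).
     { rewrite (rsum_ext _ _ _ Hws). rewrite rsum_swap.
       rewrite (rsum_ext _ _ (fun n => c n * rsum K (fun k => y n k * x n k))) by (intros; rewrite rsum_scal; auto).
       apply Hcsum. intros n Hn. destruct (Hxy n Hn) as [_ [_ [_ [_ E]]]]. auto. }
     assert (Hwpos : inPiplus K ws).
     { split; auto. intros k Hk. rewrite Hws by auto. apply rsum_pos. intros; apply Hterm; auto.
       assert (Hex : exists n, (n < N)%nat /\ 0 < c n).
       { apply NNPP. intro Hno. assert (rsum N c = 0).
         { apply rsum_zero. intros n Hn. assert (H0 := Hc0 n Hn). destruct H0; auto.
           exfalso; apply Hno; exists n; auto. }
         lra. }
       destruct Hex as [n [Hn Hcn]]. exists n. split; auto.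
       destruct (classic (inN0 K N C Ph pbar n)) as [Hi|Hi].
       - destruct (Hxy n Hi) as [Hx [Hy _]]. apply Rmult_lt_0_compat; auto. apply Rmult_lt_0_compat; auto.
       - rewrite Hcz in Hcn by auto. lra. }
     assert (Hpe' : forall j, (j < K)%nat -> pbar j = ps j) by (intros; symmetry; auto).
     assert (HGps : forall w, rsum K w = 1 -> Gfun K phi V z gam w ps = psi phi (rhoP P)).
     { intros w Hw. rewrite (Gfun_ext K phi V z gam w ps pbar Hpe). auto. }
     split; [|split; [|split]]; auto.
     * exact (inPplus_ext K N C Ph pbar ps Hpe' Hpb).
     * intros w Hw. rewrite !HGps by (apply Hw || auto). lra.
     * intros p Hp. rewrite HGps by auto.
       rewrite (Gfun_ext_w K phi V z gam ws (fun k => rsum N (fun n => c n * (y n k * x n k))) p Hws), G_lin.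
       rewrite <- (Rmult_1_l (psi phi (rhoP P))). rewrite <- Hc1, <- rsum_scal_r.
       apply rsum_le. intros n Hn. destruct (classic (inN0 K N C Ph pbar n)) as [Hi|Hi].
       -- apply Rmult_le_compat_l. apply Hc0; auto.
          destruct (Hxy n Hi) as [Hx [Hy [Ex [Ey Hyx]]]]. apply (Hkey n); auto.
       -- rewrite Hcz by auto. lra.
Qed.
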